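(* Let $\mathsf Y=\mathsf Y_1\times\cdots\times\mathsf Y_L$ be a product of Euclidean spaces and let $S:\mathsf Y\to\mathsf Y$ be a firmly non-expansive operator with domain $\mathsf Y$, written $S(\zeta)=(S_1(\zeta),\dots,S_L(\zeta))$ with $S_\ell(\zeta)\in\mathsf Y_\ell$. For $\ell=1,\dots,L$ define $\hat S_\ell:\mathsf Y\to\mathsf Y$ by $$\hat S_\ell(\zeta)=(\zeta_1,\dots,\zeta_{\ell-1},S_\ell(\zeta),\zeta_{\ell+1},\dots,\zeta_L).$$ Let $(\xi^k)_{k\ge1}$ be i.i.d. random variables on a probability space, valued in $\{1,\dots,L\}$, with $\mathbb P[\xi^1=\ell]=p_\ell>0$ for all $\ell$. Assume the fixed point set $\mathrm{fix}(S)$ is nonempty. Then for any initial value $\zeta^0\in\mathsf Y$, the sequence $\zeta^{k+1}=\hat S_{\xi^{k+1}}(\zeta^k)$ converges almost surely to a random variable taking values in $\mathrm{fix}(S)$.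
   Context: An operator $S$ on a Euclidean space $\mathsf Y$ is firmly non-expansive if $\langle x-x',S(x)-S(x')\rangle\ge\|S(x)-S(x')\|^2$ for all $x,x'$ (in particular it is single valued). $\mathrm{fix}(S)=\{\zeta:S(\zeta)=\zeta\}$. *)

(* Defs.v *)
From Stdlib Require Import Reals List.
Open Scope R_scope.

Fixpoint rsum (n : nat) (f : nat -> R) : R :=
  match n with O => 0 | S m => rsum m f + f m end.

(** The product space  Y = Y_0 x ... x Y_{L-1},  Y_l = R^(d l).
    An element is represented by  z : nat -> nat -> R,  z l i  being the
    i-th coordinate of the l-th block; only the entries with l < L, i < d l
    are meaningful (the others are ignored by every notion below). *)
Definition Yvec := nat -> nat -> R.

Definition Yeq (L : nat) (d : nat -> nat) (x y : Yvec) : Prop :=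
  forall l i, (l < L)%nat -> (i < d l)%nat -> x l i = y l i.

Definition Yip (L : nat) (d : nat -> nat) (x y : Yvec) : R :=
  rsum L (fun l => rsum (d l) (fun i => x l i * y l i)).

Definition Ysub (x y : Yvec) : Yvec := fun l i => x l i - y l i.

Definition firmly_nonexpansive (L : nat) (d : nat -> nat) (S : Yvec -> Yvec) : Prop :=
  forall x x', Yip L d (Ysub x x') (Ysub (S x) (S x'))
               >= Yip L d (Ysub (S x) (S x')) (Ysub (S x) (S x')).

Definition fixS (L : nat) (d : nat -> nat) (S : Yvec -> Yvec) (z : Yvec) : Prop :=
  Yeq L d (S z) z.

Definition Shat (S : Yvec -> Yvec) (l : nat) (z : Yvec) : Yvec :=
  fun l' i => if Nat.eqb l' l then S z l i else z l' i.

Record ProbSpace := {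
  Omega : Type;
  meas : (Omega -> Prop) -> Prop;
  Pr : (Omega -> Prop) -> R;
  meas_full : meas (fun _ => True);
  meas_compl : forall A, meas A -> meas (fun w => ~ A w);
  meas_cunion : forall A : nat -> Omega -> Prop,
      (forall n, meas (A n)) -> meas (fun w => exists n, A n w);
  Pr_nonneg : forall A, meas A -> 0 <= Pr A;
  Pr_full : Pr (fun _ => True) = 1;
  Pr_sigma_additive : forall A : nat -> Omega -> Prop,
      (forall n, meas (A n)) ->
      (forall n m w, n <> m -> A n w -> A m w -> False) ->
      infinite_sum (fun n => Pr (A n)) (Pr (fun w => exists n, A n w))
}.

Definition indep_discrete (Ps : ProbSpace) (xi : nat -> Omega Ps -> nat) : Prop :=
  forall (ks : list nat) (a : nat -> nat),
    NoDup ks -> (forall k, In k ks -> (1 <= k)%nat) ->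
    Pr Ps (fun w => forall k, In k ks -> xi k w = a k)
    = fold_right (fun k acc => Pr Ps (fun w => xi k w = a k) * acc) 1 ks.

Fixpoint rbcd_iter (S : Yvec -> Yvec) (xi : nat -> nat) (z0 : Yvec) (k : nat) : Yvec :=
  match k with
  | O => z0
  | Datatypes.S k' => Shat S (xi (Datatypes.S k')) (rbcd_iter S xi z0 k')
  end.

(* Main.v *)
Require Import Defs.
From Stdlib Require Import Reals List Lra Lia Classical ClassicalEpsilon FunctionalExtensionality PropExtensionality.
Open Scope R_scope.

Lemma rsum_ext n f g : (forall k, (k < n)%nat -> f k = g k) -> rsum n f = rsum n g.
Proof. induction n; simpl; intros H; auto. rewrite IHn by (intros; apply H; lia). rewrite H by lia; auto. Qed.

Lemma rsum_plus n f g : rsum n (fun k => f k + g k) = rsum n f + rsum n g.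
Proof. induction n; simpl; [lra|]. rewrite IHn; lra. Qed.

Lemma rsum_minus n f g : rsum n (fun k => f k - g k) = rsum n f - rsum n g.
Proof. induction n; simpl; [lra|]. rewrite IHn; lra. Qed.

Lemma rsum_scal n c f : rsum n (fun k => c * f k) = c * rsum n f.
Proof. induction n; simpl; [lra|]. rewrite IHn; lra. Qed.

Lemma rsum_const0 n : rsum n (fun _ => 0) = 0.
Proof. induction n; simpl; [lra|]. rewrite IHn; lra. Qed.

Lemma rsum_le n f g : (forall k, (k < n)%nat -> f k <= g k) -> rsum n f <= rsum n g.
Proof. induction n; simpl; intros H; [lra|]. assert (f n <= g n) by (apply H; lia).
  assert (rsum n f <= rsum n g) by (apply IHn; intros; apply H; lia). lra. Qed.

Lemma rsum_nonneg n f : (forall k, (k < n)%nat -> 0 <= f k) -> 0 <= rsum n f.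
Proof. intros H. rewrite <- (rsum_const0 n). apply rsum_le; auto. Qed.

Lemma rsum_term_le n f k : (forall j, (j < n)%nat -> 0 <= f j) -> (k < n)%nat -> f k <= rsum n f.
Proof. induction n; simpl; intros H Hk; [lia|].
  destruct (Nat.eq_dec k n) as [->|Hne].
  - assert (0 <= rsum n f) by (apply rsum_nonneg; intros; apply H; lia). lra.
  - assert (f k <= rsum n f) by (apply IHn; [intros; apply H|]; lia).
    assert (0 <= f n) by (apply H; lia). lra. Qed.

Lemma rsum_zero_each n f : (forall j, (j < n)%nat -> 0 <= f j) -> rsum n f = 0 ->
  forall k, (k < n)%nat -> f k = 0.
Proof. intros H0 Hs k Hk. pose proof (rsum_term_le n f k H0 Hk). pose proof (H0 k Hk). lra. Qed.

Lemma rsum_upd n f l v : (l < n)%nat ->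
  rsum n (fun j => if Nat.eqb j l then v else f j) = rsum n f + (v - f l).
Proof. induction n; simpl; intros H; [lia|].
  destruct (Nat.eqb_spec n l).
  - subst. rewrite (rsum_ext l _ f). lra. intros k Hk. destruct (Nat.eqb_spec k l); [lia|auto].
  - rewrite IHn by lia. lra. Qed.

Lemma rsum_pos_r n f : (forall j, (j < n)%nat -> 0 <= f j) -> 0 <= rsum n f.
Proof. apply rsum_nonneg. Qed.

Lemma sum_f_R0_rsum f N : sum_f_R0 f N = rsum (S N) f.
Proof. induction N; simpl; [lra|]. simpl in IHN. rewrite IHN. lra. Qed.

Lemma rsum_trunc n m f : (n <= m)%nat -> (forall k, (n <= k)%nat -> f k = 0) -> rsum m f = rsum n f.
Proof. intros H. induction H; intros Hz; auto. simpl. rewrite IHle by auto. rewrite Hz by lia. lra. Qed.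

Lemma pred_ext {T} (A B : T -> Prop) : (forall w, A w <-> B w) -> A = B.
Proof. intros H. apply functional_extensionality; intros w. apply propositional_extensionality. auto. Qed.

Lemma Pr_ext (Ps : ProbSpace) A B : (forall w, A w <-> B w) -> Pr Ps A = Pr Ps B.
Proof. intros H. rewrite (pred_ext A B H). auto. Qed.
Lemma meas_ext (Ps : ProbSpace) A B : (forall w, A w <-> B w) -> meas Ps A -> meas Ps B.
Proof. intros H. rewrite (pred_ext A B H). auto. Qed.

Lemma meas_false Ps : meas Ps (fun _ => False).
Proof. apply (meas_ext Ps (fun w => ~ True)). tauto. apply meas_compl, meas_full. Qed.
Lemma meas_true Ps : meas Ps (fun _ => True).
Proof. apply meas_full. Qed.
Lemma meas_const Ps (P : Prop) : meas Ps (fun _ => P).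
Proof. destruct (classic P). apply (meas_ext _ (fun _ => True)); [tauto|apply meas_full].
  apply (meas_ext _ (fun _ => False)); [tauto|apply meas_false]. Qed.
Lemma meas_not Ps A : meas Ps A -> meas Ps (fun w => ~ A w).
Proof. apply meas_compl. Qed.
Lemma meas_exists Ps (A : nat -> Omega Ps -> Prop) : (forall n, meas Ps (A n)) -> meas Ps (fun w => exists n, A n w).
Proof. apply meas_cunion. Qed.
Lemma meas_forall Ps (A : nat -> Omega Ps -> Prop) : (forall n, meas Ps (A n)) -> meas Ps (fun w => forall n, A n w).
Proof. intros H. apply (meas_ext _ (fun w => ~ exists n, ~ A n w)).
  - intros w; split. intros H1 n. apply NNPP; intros H2; apply H1; eauto. intros H1 [n Hn]; auto.
  - apply meas_compl, meas_cunion. intros; apply meas_compl; auto. Qed.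
Lemma meas_or Ps A B : meas Ps A -> meas Ps B -> meas Ps (fun w => A w \/ B w).
Proof. intros HA HB. apply (meas_ext _ (fun w => exists n, (n = 0%nat /\ A w) \/ (n <> 0%nat /\ B w))).
  - intros w; split. intros [n [[_ H]|[_ H]]]; auto. intros [H|H]; [exists 0%nat|exists 1%nat]; auto.
  - apply meas_cunion. intros n. destruct (Nat.eq_dec n 0).
    + apply (meas_ext _ A); auto. intros; tauto.
    + apply (meas_ext _ B); auto. intros; tauto. Qed.
Lemma meas_and Ps A B : meas Ps A -> meas Ps B -> meas Ps (fun w => A w /\ B w).
Proof. intros HA HB. apply (meas_ext _ (fun w => ~ (~ A w \/ ~ B w))).
  intros w; tauto. apply meas_compl, meas_or; apply meas_compl; auto. Qed.
Lemma meas_impl Ps A B : meas Ps A -> meas Ps B -> meas Ps (fun w => A w -> B w).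
Proof. intros HA HB. apply (meas_ext _ (fun w => ~ A w \/ B w)). intros w; tauto.
  apply meas_or; auto. apply meas_compl; auto. Qed.
Lemma meas_impl_const Ps (P : Prop) B : meas Ps B -> meas Ps (fun w => P -> B w).
Proof. intros; apply meas_impl; auto; apply meas_const. Qed.
Lemma meas_and_const Ps (P : Prop) B : meas Ps B -> meas Ps (fun w => P /\ B w).
Proof. intros; apply meas_and; auto; apply meas_const. Qed.

Lemma Pr_empty Ps : Pr Ps (fun _ => False) = 0.
Proof.
  pose proof (Pr_sigma_additive Ps (fun _ _ => False) (fun _ => meas_false Ps)) as H. cbv beta in H.
  assert (E : Pr Ps (fun w => exists n : nat, False) = Pr Ps (fun _ => False)) by (apply Pr_ext; firstorder).
  rewrite E in H. clear E. specialize (H ltac:(tauto)). set (c := Pr Ps (fun _ => False)) in *.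
  unfold infinite_sum in H.
  assert (H1 : Un_cv (fun n => sum_f_R0 (fun _ => c) (S n)) c).
  { intros e He. destruct (H e He) as [N HN]. exists N. intros n Hn. apply HN. lia. }
  assert (H2 : Un_cv (fun n => sum_f_R0 (fun _ => c) (S n) - sum_f_R0 (fun _ => c) n) (c - c)).
  { apply CV_minus; auto. }
  assert (H3 : Un_cv (fun n => sum_f_R0 (fun _ => c) (S n) - sum_f_R0 (fun _ => c) n) c).
  { intros e He. exists 0%nat. intros n _. simpl. unfold Rdist. replace (sum_f_R0 (fun _ : nat => c) n + c - sum_f_R0 (fun _ : nat => c) n - c) with 0 by ring. rewrite Rabs_R0; auto. }
  pose proof (UL_sequence _ _ _ H2 H3). lra.
Qed.

Lemma Pr_finite_union Ps n (A : nat -> Omega Ps -> Prop) :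
  (forall k, (k < n)%nat -> meas Ps (A k)) ->
  (forall j k w, (j < n)%nat -> (k < n)%nat -> j <> k -> A j w -> A k w -> False) ->
  Pr Ps (fun w => exists k, (k < n)%nat /\ A k w) = rsum n (fun k => Pr Ps (A k)).
Proof.
  intros Hm Hd. set (B := fun k w => (k < n)%nat /\ A k w).
  assert (HB : forall k, meas Ps (B k)).
  { intros k. unfold B. destruct (Compare_dec.lt_dec k n).
    - apply (meas_ext _ (A k)); [intros; tauto|auto].
    - apply (meas_ext _ (fun _ => False)); [intros; tauto|apply meas_false]. }
  pose proof (Pr_sigma_additive Ps B HB) as H.
  assert (H' : infinite_sum (fun k => Pr Ps (B k)) (Pr Ps (fun w => exists k, B k w))).
  { apply H. intros j k w Hjk [Hj Aj] [Hk Ak]. eapply Hd; eauto. }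
  clear H. unfold B in H'.
  assert (Hz : forall k, (n <= k)%nat -> Pr Ps (fun w => (k < n)%nat /\ A k w) = 0).
  { intros k Hk. rewrite <- (Pr_empty Ps). apply Pr_ext. intros; lia. }
  assert (Hc : Un_cv (fun N => sum_f_R0 (fun k => Pr Ps (fun w => (k < n)%nat /\ A k w)) N)
                 (rsum n (fun k => Pr Ps (A k)))).
  { intros e He. exists n. intros N HN. rewrite sum_f_R0_rsum. rewrite (rsum_trunc n) by (auto; lia).
    rewrite (rsum_ext n _ (fun k => Pr Ps (A k))). unfold Rdist. rewrite Rminus_diag, Rabs_R0; auto.
    intros k Hk. apply Pr_ext. intros; tauto. }
  apply (UL_sequence _ _ _ H' Hc).
Qed.

Lemma Pr_union2 Ps A B : meas Ps A -> meas Ps B -> (forall w, A w -> B w -> False) ->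
  Pr Ps (fun w => A w \/ B w) = Pr Ps A + Pr Ps B.
Proof.
  intros HA HB Hd.
  set (F := fun k w => (k = 0%nat /\ A w) \/ (k = 1%nat /\ B w)).
  assert (E : Pr Ps (fun w => A w \/ B w) = Pr Ps (fun w => exists k, (k < 2)%nat /\ F k w)).
  { apply Pr_ext. intros w; unfold F; split.
    intros [H|H]; [exists 0%nat|exists 1%nat]; split; auto; lia.
    intros [k [Hk [[_ H]|[_ H]]]]; auto. }
  rewrite E, Pr_finite_union.
  - simpl. rewrite (Pr_ext _ (F 0%nat) A), (Pr_ext _ (F 1%nat) B); unfold F; try (intros; intuition lia). lra.
  - intros k Hk. unfold F. destruct (Nat.eq_dec k 0) as [->|]. apply (meas_ext _ A); auto; intuition lia.
    apply (meas_ext _ B); auto. intros; intuition lia.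
  - intros j k w Hj Hk Hjk; unfold F. intros [[-> H1]|[-> H1]] [[-> H2]|[-> H2]]; try lia; eauto.
Qed.

Lemma Pr_mono Ps A B : meas Ps A -> meas Ps B -> (forall w, A w -> B w) -> Pr Ps A <= Pr Ps B.
Proof.
  intros HA HB H. rewrite (Pr_ext _ B (fun w => A w \/ (B w /\ ~ A w))).
  rewrite Pr_union2; auto. pose proof (Pr_nonneg Ps (fun w => B w /\ ~ A w)). 
  assert (meas Ps (fun w => B w /\ ~ A w)) by (apply meas_and; auto; apply meas_compl; auto). 
  specialize (H0 H1). lra. apply meas_and; auto; apply meas_compl; auto. intros w ? [? ?]; auto.
  intros w; split. intros Hb. destruct (classic (A w)); auto. intros [?|[? ?]]; auto.
Qed.

Lemma Pr_compl Ps A : meas Ps A -> Pr Ps (fun w => ~ A w) = 1 - Pr Ps A.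
Proof. intros HA. pose proof (Pr_full Ps) as F.
  rewrite (Pr_ext _ (fun _ => True) (fun w => A w \/ ~ A w)) in F.
  rewrite Pr_union2 in F; auto. lra. all: try (apply meas_compl; auto). all: try (intros w; tauto).
  all: try (intros w; split; auto; intros; apply classic). Qed.

Lemma Pr_le1 Ps A : meas Ps A -> Pr Ps A <= 1.
Proof. intros HA. rewrite <- (Pr_full Ps). apply Pr_mono; auto. apply meas_full. Qed.

Lemma Pr_ge0 Ps A : meas Ps A -> 0 <= Pr Ps A.
Proof. apply Pr_nonneg. Qed.

Lemma incr_union_bound Ps (A : nat -> Omega Ps -> Prop) c :
  (forall n, meas Ps (A n)) -> (forall n w, A n w -> A (S n) w) -> (forall n, Pr Ps (A n) <= c) ->
  Pr Ps (fun w => exists n, A n w) <= c.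
Proof.
  intros Hm Hi Hc.
  set (D := fun n w => match n with O => A O w | S k => A (S k) w /\ ~ A k w end).
  assert (HD : forall n, meas Ps (D n)).
  { intros [|k]; unfold D; auto. apply meas_and; auto. apply meas_compl; auto. }
  assert (Hmono : forall n k w, (n <= k)%nat -> A n w -> A k w).
  { intros n k w Hk. induction Hk; auto. }
  assert (Hdisj : forall n m w, n <> m -> D n w -> D m w -> False).
  { intros n m w Hnm. assert (G : forall a b, (a < b)%nat -> D a w -> D b w -> False).
    { intros a b Hab Ha Hb. destruct b as [|b]; [lia|]. unfold D in Hb. destruct Hb as [_ Hb]. apply Hb.
      apply (Hmono a). lia. unfold D in Ha; destruct a; tauto. }
    intros H1 H2. destruct (Compare_dec.lt_dec n m); [eapply G; eauto|]. eapply (G m n); eauto; lia. }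
  pose proof (Pr_sigma_additive Ps D HD Hdisj) as H.
  assert (Hs : forall N, sum_f_R0 (fun n => Pr Ps (D n)) N = Pr Ps (A N)).
  { induction N; simpl; auto. rewrite IHN.
    rewrite (Pr_ext _ (A (S N)) (fun w => A N w \/ (A (S N) w /\ ~ A N w))).
    rewrite Pr_union2; auto. apply meas_and; auto; apply meas_compl; auto. intros w ? [? ?]; auto.
    intros w; split. intros. destruct (classic (A N w)); auto. intros [?|[? ?]]; auto. }
  assert (Eu : Pr Ps (fun w => exists n, D n w) = Pr Ps (fun w => exists n, A n w)).
  { apply Pr_ext. intros w; split.
    - intros [n Hn]; exists n. destruct n; simpl in Hn; tauto.
    - intros [n Hn]. induction n. exists 0%nat; auto.
      destruct (classic (A n w)); auto. exists (S n); simpl; auto. }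
  rewrite <- Eu. unfold infinite_sum in H.
  apply Rnot_lt_le; intros Hlt.
  destruct (H (Pr Ps (fun w => exists n, D n w) - c)) as [N HN]. lra.
  specialize (HN N (le_n _)). rewrite Hs in HN. specialize (Hc N). unfold Rdist in HN.
  rewrite Rabs_left1 in HN; lra.
Qed.

Lemma null_union Ps (N : nat -> Omega Ps -> Prop) :
  (forall k, meas Ps (N k)) -> (forall k, Pr Ps (N k) = 0) -> Pr Ps (fun w => exists k, N k w) = 0.
Proof.
  intros Hm H0. set (A := fun n w => exists k, (k <= n)%nat /\ N k w).
  assert (HA : forall n, meas Ps (A n)).
  { intros n. unfold A. apply meas_exists. intros k. apply meas_and_const; auto. }
  assert (HAb : forall n, Pr Ps (A n) <= 0).
  { induction n.
    - rewrite (Pr_ext _ _ (N 0%nat)). rewrite H0; lra. intros w; unfold A; split.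
      intros [k [Hk Hn]]. replace k with 0%nat in Hn by lia. auto. intros; exists 0%nat; auto.
    - apply Rle_trans with (Pr Ps (fun w => A n w \/ (N (S n) w /\ ~ A n w))).
      + apply Req_le, Pr_ext. intros w; unfold A; split.
        * intros [k [Hk Hn]]. destruct (classic (exists k, (k <= n)%nat /\ N k w)); auto.
          right. split; auto. replace (S n) with k; auto. destruct (Nat.eq_dec k (S n)); auto.
          exfalso; apply H; exists k; split; auto; lia.
        * intros [[k [Hk Hn]]|[Hn _]]; [exists k; split; auto; lia | exists (S n); auto].
      + rewrite Pr_union2; auto. 
        assert (Pr Ps (fun w => N (S n) w /\ ~ A n w) <= Pr Ps (N (S n))).
        { apply Pr_mono; auto. apply meas_and; auto; apply meas_compl; auto. tauto. }
        rewrite H0 in H. lra. apply meas_and; auto; apply meas_compl; auto. intros w ? [? ?]; auto. }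
  apply Rle_antisym.
  - rewrite (Pr_ext _ _ (fun w => exists n, A n w)). apply incr_union_bound; auto.
    intros n w [k [Hk Hn]]; exists k; split; auto. 
    intros w; split. intros [k Hk]; exists k, k; auto. intros [n [k [_ Hk]]]; eauto.
  - apply Pr_nonneg, meas_exists; auto.
Qed.

Lemma prob1_forall Ps (A : nat -> Omega Ps -> Prop) :
  (forall k, meas Ps (A k)) -> (forall k, Pr Ps (A k) = 1) ->
  meas Ps (fun w => forall k, A k w) /\ Pr Ps (fun w => forall k, A k w) = 1.
Proof.
  intros Hm H1. split. apply meas_forall; auto.
  assert (Hn : Pr Ps (fun w => exists k, ~ A k w) = 0).
  { apply null_union. intros; apply meas_compl; auto. intros k. rewrite Pr_compl; auto. rewrite H1; lra. }
  rewrite (Pr_ext _ _ (fun w => ~ exists k, ~ A k w)).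
  rewrite Pr_compl. lra. apply meas_exists; intros; apply meas_compl; auto.
  intros w; split. intros H [k Hk]; auto. intros H k; apply NNPP; intros Hk; apply H; eauto.
Qed.

Lemma prob1_and Ps A B : meas Ps A -> meas Ps B -> Pr Ps A = 1 -> Pr Ps B = 1 ->
  Pr Ps (fun w => A w /\ B w) = 1.
Proof. intros HA HB H1 H2.
  destruct (prob1_forall Ps (fun k w => if Nat.eqb k 0 then A w else B w)) as [_ H].
  intros [|k]; simpl; auto. intros [|k]; simpl; auto.
  rewrite <- H. apply Pr_ext. intros w; split. intros [? ?] [|k]; simpl; auto.
  intros Hk; split; [apply (Hk 0%nat)|apply (Hk 1%nat)]. Qed.

Lemma prob1_mono Ps A B : meas Ps A -> meas Ps B -> Pr Ps A = 1 -> (forall w, A w -> B w) -> Pr Ps B = 1.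
Proof. intros HA HB H1 H. pose proof (Pr_mono Ps A B HA HB H). pose proof (Pr_le1 Ps B HB). lra. Qed.

Lemma null_of_bounds Ps A c : meas Ps A -> (forall K : nat, Pr Ps A <= c / INR (S K)) -> Pr Ps A = 0.
Proof.
  intros HA H. pose proof (Pr_nonneg Ps A HA). apply Rle_antisym; auto.
  apply Rnot_lt_le; intros Hp.
  destruct (INR_unbounded (c / Pr Ps A)) as [K HK].
  specialize (H K). rewrite S_INR in H.
  assert (Hk : 0 < INR K + 1) by (pose proof (pos_INR K); lra).
  apply Rmult_le_compat_r with (r := INR K + 1) in H; [|lra].
  unfold Rdiv in H. rewrite Rmult_assoc, Rinv_l in H by lra.
  unfold Rdiv in HK.
  apply Rmult_lt_compat_r with (r := Pr Ps A) in HK; auto. rewrite Rmult_assoc, Rinv_l in HK by lra. nra.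
Qed.

Fixpoint hist (Ps : ProbSpace) (xi : nat -> Omega Ps -> nat) (n : nat) (w : Omega Ps) : list nat :=
  match n with O => nil | S m => xi (S m) w :: hist Ps xi m w end.

Definition valid (L : nat) (s : list nat) := forall x, In x s -> (x < L)%nat.

Fixpoint all_hist (L n : nat) : list (list nat) :=
  match n with O => nil :: nil
  | S m => flat_map (fun h => map (fun l => l :: h) (seq 0 L)) (all_hist L m) end.

Lemma all_hist_In L n s : length s = n -> valid L s -> In s (all_hist L n).
Proof.
  revert s; induction n; intros s Hl Hv.
  - destruct s; simpl in *; [auto|lia].
  - destruct s as [|x s]; simpl in Hl; [lia|]. simpl. apply in_flat_map. exists s. split.
    apply IHn. lia. intros y Hy; apply Hv; simpl; auto.
    apply in_map_iff. exists x. split; auto. apply in_seq. assert (x < L)%nat by (apply Hv; simpl; auto). lia.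
Qed.

Lemma hist_length Ps xi n w : length (hist Ps xi n w) = n.
Proof. induction n; simpl; auto. Qed.

Lemma hist_valid Ps xi L : (forall k w, (1 <= k)%nat -> (xi k w < L)%nat) ->
  forall n w, valid L (hist Ps xi n w).
Proof. intros H n w. induction n; simpl; intros x Hx; [tauto|]. destruct Hx as [<-|Hx]; auto. apply H; lia. Qed.

Lemma meas_hist_eq Ps xi : (forall k l, meas Ps (fun w => xi k w = l)) ->
  forall n s, meas Ps (fun w => hist Ps xi n w = s).
Proof.
  intros Hm n. induction n; intros s; simpl.
  - apply meas_const.
  - destruct s as [|x s].
    + apply (meas_ext _ (fun _ => False)); [intros; split; [tauto|discriminate]|apply meas_false].
    + apply (meas_ext _ (fun w => xi (S n) w = x /\ hist Ps xi n w = s)).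
      intros w; split. intros [-> ->]; auto. intros H; injection H; auto.
      apply meas_and; auto.
Qed.

Lemma meas_hist_fun Ps xi L : (forall k l, meas Ps (fun w => xi k w = l)) ->
  (forall k w, (1 <= k)%nat -> (xi k w < L)%nat) ->
  forall n (Q : list nat -> Omega Ps -> Prop), (forall s, meas Ps (Q s)) ->
  meas Ps (fun w => Q (hist Ps xi n w) w).
Proof.
  intros Hm Hr n Q HQ.
  apply (meas_ext _ (fun w => exists j, hist Ps xi n w = nth j (all_hist L n) nil /\ Q (nth j (all_hist L n) nil) w)).
  - intros w; split. intros [j [-> H]]; auto.
    intros H. destruct (In_nth _ _ nil (all_hist_In L n (hist Ps xi n w) (hist_length _ _ _ _) (hist_valid _ _ _ Hr n w))) as [j [_ Hj]].
    exists j. rewrite Hj. auto.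
  - apply meas_exists. intros j. apply meas_and; auto. apply meas_hist_eq; auto.
Qed.

Definition prodw (p : nat -> R) (s : list nat) : R := fold_right (fun l acc => p l * acc) 1 s.

Fixpoint down (m : nat) : list nat := match m with O => nil | S k => S k :: down k end.

Lemma down_In m k : In k (down m) <-> (1 <= k <= m)%nat.
Proof. induction m; simpl; [lia|]. rewrite IHm. lia. Qed.

Lemma down_NoDup m : NoDup (down m).
Proof. induction m; simpl; constructor; auto. rewrite down_In. lia. Qed.

Lemma hist_eq_iff Ps xi m w s : length s = m ->
  (hist Ps xi m w = s <-> forall k, In k (down m) -> xi k w = nth (m - k) s 0%nat).
Proof.
  revert s; induction m; intros s Hl.
  - destruct s; simpl in *; [|lia]. split; auto. intros; tauto.
  - destruct s as [|x s]; simpl in Hl; [lia|]. cbn [hist down].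
    assert (Hn : forall k, (1 <= k <= m)%nat -> nth (S m - k) (x :: s) 0%nat = nth (m - k) s 0%nat).
    { intros k Hk. replace (S m - k)%nat with (S (m - k)) by lia. reflexivity. }
    assert (H0 : nth (S m - S m) (x :: s) 0%nat = x) by (rewrite Nat.sub_diag; reflexivity).
    split.
    + intros H. injection H as H1 H2. intros k [<-|Hk]. rewrite H0; auto.
      apply down_In in Hk as Hk'. rewrite Hn by auto.
      apply (IHm s ltac:(lia)); auto.
    + intros H. f_equal. specialize (H (S m) (or_introl eq_refl)). rewrite H0 in H; auto.
      apply (IHm s ltac:(lia)). intros k Hk. apply down_In in Hk as Hk'.
      rewrite (H k (or_intror Hk)). apply Hn; auto.
Qed.

Lemma fold_down Ps xi L p :
  (forall k l, (1 <= k)%nat -> (l < L)%nat -> Pr Ps (fun w => xi k w = l) = p l) ->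
  forall m s (a : nat -> nat), length s = m -> valid L s ->
  (forall k, In k (down m) -> a k = nth (m - k) s 0%nat) ->
  fold_right (fun k acc => Pr Ps (fun w => xi k w = a k) * acc) 1 (down m) = prodw p s.
Proof.
  intros Hlaw m. induction m; intros s a Hl Hv Ha.
  - destruct s; simpl in *; auto; lia.
  - destruct s as [|x s]; simpl in Hl; [lia|]. cbn [down fold_right prodw].
    rewrite (Ha (S m) (or_introl eq_refl)). 
    assert (H0 : nth (S m - S m) (x :: s) 0%nat = x) by (rewrite Nat.sub_diag; reflexivity).
    rewrite H0.
    rewrite Hlaw by (try lia; apply Hv; simpl; auto). unfold prodw; simpl. f_equal.
    apply IHm. lia. intros y Hy; apply Hv; simpl; auto.
    intros k Hk. rewrite Ha by (simpl; auto). apply down_In in Hk. replace (S m - k)%nat with (S (m - k)) by lia. auto.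
Qed.

Lemma Pr_cyl Ps xi L p :
  (forall k l, (1 <= k)%nat -> (l < L)%nat -> Pr Ps (fun w => xi k w = l) = p l) ->
  indep_discrete Ps xi ->
  forall m s, length s = m -> valid L s -> Pr Ps (fun w => hist Ps xi m w = s) = prodw p s.
Proof.
  intros Hlaw Hind m s Hl Hv.
  rewrite (Pr_ext _ _ (fun w => forall k, In k (down m) -> xi k w = (fun k => nth (m - k) s 0%nat) k)).
  rewrite Hind. apply (fold_down Ps xi L p Hlaw m s); auto.
  apply down_NoDup. intros k Hk; apply down_In in Hk; lia.
  intros w. apply hist_eq_iff; auto.
Qed.

Fixpoint Ex (L : nat) (p : nat -> R) (n : nat) (f : list nat -> R) (h : list nat) : R :=
  match n with O => f h | S n' => rsum L (fun l => p l * Ex L p n' f (l :: h)) end.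

Definition indic (P : list nat -> Prop) (h : list nat) : R :=
  if excluded_middle_informative (P h) then 1 else 0.

Lemma hist_add Ps xi n m w : hist Ps xi (S n + m) w = hist Ps xi (n + S m) w.
Proof. rewrite Nat.add_succ_r. auto. Qed.

Lemma Pr_hist_gen Ps xi L p :
  (forall k l, meas Ps (fun w => xi k w = l)) ->
  (forall k w, (1 <= k)%nat -> (xi k w < L)%nat) ->
  (forall k l, (1 <= k)%nat -> (l < L)%nat -> Pr Ps (fun w => xi k w = l) = p l) ->
  indep_discrete Ps xi ->
  forall n m s (P : list nat -> Prop), length s = m -> valid L s ->
  Pr Ps (fun w => hist Ps xi m w = s /\ P (hist Ps xi (n + m) w)) = prodw p s * Ex L p n (indic P) s.
Proof.
  intros Hm Hr Hlaw Hind n. induction n; intros m s P Hl Hv.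
  - simpl. unfold indic. destruct (excluded_middle_informative (P s)).
    + rewrite (Pr_ext _ _ (fun w => hist Ps xi m w = s)). rewrite (Pr_cyl Ps xi L p); auto; lra.
      intros w; split; [tauto|]. intros H; split; auto; rewrite H; auto.
    + rewrite (Pr_ext _ _ (fun _ => False)). rewrite Pr_empty; lra.
      intros w; split; [|tauto]. intros [H1 H2]; rewrite H1 in H2; auto.
  - rewrite (Pr_ext _ _ (fun w => exists l, (l < L)%nat /\ (hist Ps xi (S m) w = l :: s /\ P (hist Ps xi (n + S m) w)))).
    rewrite Pr_finite_union.
    + simpl Ex. rewrite <- rsum_scal. apply rsum_ext. intros l Hl'.
      rewrite IHn; simpl; auto. lra. intros y [<-|Hy]; auto.
    + intros l _. apply meas_and. apply meas_hist_eq; auto.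
      apply (meas_hist_fun Ps xi L Hm Hr (n + S m) (fun h _ => P h)). intros; apply meas_const.
    + intros j k w _ _ Hjk [H1 _] [H2 _]. rewrite H1 in H2. injection H2; auto.
    + intros w. rewrite <- hist_add. simpl. split.
      * intros [H1 H2]. exists (xi (S m) w). split. apply Hr; lia. rewrite H1. auto.
      * intros [l [_ [H1 H2]]]. injection H1 as _ H1. auto.
Qed.

Lemma Pr_hist Ps xi L p :
  (forall k l, meas Ps (fun w => xi k w = l)) ->
  (forall k w, (1 <= k)%nat -> (xi k w < L)%nat) ->
  (forall k l, (1 <= k)%nat -> (l < L)%nat -> Pr Ps (fun w => xi k w = l) = p l) ->
  indep_discrete Ps xi ->
  forall n (P : list nat -> Prop), Pr Ps (fun w => P (hist Ps xi n w)) = Ex L p n (indic P) nil.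
Proof.
  intros Hm Hr Hlaw Hind n P.
  rewrite (Pr_ext _ _ (fun w => hist Ps xi 0 w = nil /\ P (hist Ps xi (n + 0) w))).
  rewrite (Pr_hist_gen Ps xi L p); auto. simpl; lra. intros x [].
  intros w; rewrite Nat.add_0_r; simpl; tauto.
Qed.

Lemma sum_p Ps xi L p :
  (forall k l, meas Ps (fun w => xi k w = l)) ->
  (forall k w, (1 <= k)%nat -> (xi k w < L)%nat) ->
  (forall k l, (1 <= k)%nat -> (l < L)%nat -> Pr Ps (fun w => xi k w = l) = p l) ->
  indep_discrete Ps xi -> rsum L p = 1.
Proof.
  intros Hm Hr Hlaw Hind. pose proof (Pr_hist Ps xi L p Hm Hr Hlaw Hind 1 (fun _ => True)) as H.
  rewrite Pr_full in H. simpl in H. rewrite H. apply rsum_ext. intros l _. unfold indic.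
  destruct (excluded_middle_informative True); [lra|tauto].
Qed.

Lemma Ex_ext L p n f g h : (forall h', f h' = g h') -> Ex L p n f h = Ex L p n g h.
Proof. revert h; induction n; simpl; intros h H; auto. apply rsum_ext; intros; rewrite IHn; auto. Qed.

Lemma Ex_mono L p n f g h : (forall l, (l < L)%nat -> 0 <= p l) -> (forall h', f h' <= g h') -> Ex L p n f h <= Ex L p n g h.
Proof. revert h; induction n; simpl; intros h Hp H; auto. apply rsum_le; intros.
  apply Rmult_le_compat_l; auto. Qed.

Lemma Ex_lin L p n f a b h : rsum L p = 1 ->
  Ex L p n (fun h' => a * f h' + b) h = a * Ex L p n f h + b.
Proof. revert h; induction n; simpl; intros h Hs; auto.
  rewrite (rsum_ext L _ (fun l => a * (p l * Ex L p n f (l :: h)) + b * p l)).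
  rewrite rsum_plus, rsum_scal, rsum_scal, Hs. ring.
  intros l _. rewrite IHn; auto. ring. Qed.

Lemma Ex_super L p n F h : (forall l, (l < L)%nat -> 0 <= p l) ->
  (forall h', rsum L (fun l => p l * F (l :: h')) <= F h') -> Ex L p n F h <= F h.
Proof. revert h; induction n; simpl; intros h Hp H; [lra|].
  eapply Rle_trans; [|apply H]. apply rsum_le; intros. apply Rmult_le_compat_l; auto. Qed.

Record PSetting (Ps : ProbSpace) (xi : nat -> Omega Ps -> nat) (L : nat) (p : nat -> R) : Prop := {
  s_meas : forall k l, meas Ps (fun w => xi k w = l);
  s_range : forall k w, (1 <= k)%nat -> (xi k w < L)%nat;
  s_law : forall k l, (1 <= k)%nat -> (l < L)%nat -> Pr Ps (fun w => xi k w = l) = p l;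
  s_pos : forall l, (l < L)%nat -> 0 < p l;
  s_ind : indep_discrete Ps xi }.

Lemma PS_sum Ps xi L p (HP : PSetting Ps xi L p) : rsum L p = 1.
Proof. destruct HP; eapply sum_p; eauto. Qed.
Lemma PS_nonneg Ps xi L p (HP : PSetting Ps xi L p) : forall l, (l < L)%nat -> 0 <= p l.
Proof. intros; left; apply (s_pos _ _ _ _ HP); auto. Qed.
Lemma PS_Pr Ps xi L p (HP : PSetting Ps xi L p) n P :
  Pr Ps (fun w => P (hist Ps xi n w)) = Ex L p n (indic P) nil.
Proof. destruct HP; eapply Pr_hist; eauto. Qed.
Lemma PS_mfun Ps xi L p (HP : PSetting Ps xi L p) n (Q : list nat -> Omega Ps -> Prop) :
  (forall s, meas Ps (Q s)) -> meas Ps (fun w => Q (hist Ps xi n w) w).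
Proof. destruct HP; eapply meas_hist_fun; eauto. Qed.
Lemma PS_m1 Ps xi L p (HP : PSetting Ps xi L p) n (Q : list nat -> Prop) :
  meas Ps (fun w => Q (hist Ps xi n w)).
Proof. apply (PS_mfun _ _ _ _ HP n (fun s _ => Q s)). intros; apply meas_const. Qed.
Lemma PS_m2 Ps xi L p (HP : PSetting Ps xi L p) n m (Q : list nat -> list nat -> Prop) :
  meas Ps (fun w => Q (hist Ps xi n w) (hist Ps xi m w)).
Proof. apply (PS_mfun _ _ _ _ HP n (fun s w => Q s (hist Ps xi m w))). intros s; apply PS_m1 with L p; auto. Qed.

Lemma Pr_markov Ps xi L p (HP : PSetting Ps xi L p) n (P : list nat -> Prop) (g : list nat -> R) :
  (forall h, indic P h <= g h) -> Pr Ps (fun w => P (hist Ps xi n w)) <= Ex L p n g nil.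
Proof. intros H. rewrite (PS_Pr _ _ _ _ HP). apply Ex_mono; auto. apply (PS_nonneg _ _ _ _ HP). Qed.

Definition CauchyS (u : nat -> R) := forall m : nat, exists N, forall j k, (N <= j)%nat -> (N <= k)%nat -> Rabs (u j - u k) <= / INR (S m).
Definition InftyS (u : nat -> R) := forall K : nat, exists N, forall n, (N <= n)%nat -> INR K <= u n.
Definition gr (M i : nat) : R := INR i / INR (S M).
Definition OscS (u : nat -> R) (M i : nat) :=
  (forall N, exists n, (N <= n)%nat /\ u n < gr M i) /\ (forall N, exists n, (N <= n)%nat /\ gr M (S i) < u n).

Lemma switch (P : nat -> Prop) n : P 0%nat -> ~ P n -> exists i, P i /\ ~ P (S i).
Proof. intros H0 Hn. induction n. tauto. destruct (classic (P n)); eauto. Qed.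

Lemma gr_S M i : gr M (S i) = gr M i + / INR (S M).
Proof. unfold gr. rewrite S_INR. field. pose proof (pos_INR M). rewrite S_INR; lra. Qed.

Lemma path_trichotomy (u : nat -> R) : (forall n, 0 <= u n) ->
  CauchyS u \/ InftyS u \/ exists M i, OscS u M i.
Proof.
  intros Hu. destruct (classic (InftyS u)) as [|HI]; auto.
  destruct (classic (exists M i, OscS u M i)) as [|HO]; auto. left.
  assert (HK : exists K : nat, forall N, exists n, (N <= n)%nat /\ u n < INR K).
  { apply NNPP; intros H. apply HI. intros K. apply NNPP; intros H2. apply H. exists K.
    intros N. apply NNPP; intros H3. apply H2. exists N. intros n Hn. apply Rnot_lt_le. intros H4. apply H3; eauto. }
  destruct HK as [K HK]. intros m. set (M := (2 * m + 1)%nat).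
  set (P := fun i => exists N, forall n, (N <= n)%nat -> gr M i <= u n).
  assert (P0 : P 0%nat). { exists 0%nat. intros n _. unfold gr. simpl. unfold Rdiv; rewrite Rmult_0_l; auto. }
  assert (PK : ~ P (K * S M)%nat).
  { intros [N HN]. destruct (HK N) as [n [Hn Hlt]]. specialize (HN n Hn). unfold gr in HN.
    rewrite mult_INR in HN. unfold Rdiv in HN. rewrite Rmult_assoc, Rinv_r in HN. lra.
    pose proof (pos_INR M); rewrite S_INR; lra. }
  destruct (switch P _ P0 PK) as [i [Pi nPi]].
  assert (HA : forall N, exists n, (N <= n)%nat /\ u n < gr M (S i)).
  { intros N. apply NNPP; intros H. apply nPi. exists N. intros n Hn. apply Rnot_lt_le. intros H4. apply H; eauto. }
  assert (HB : exists N, forall n, (N <= n)%nat -> u n <= gr M (S (S i))).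
  { apply NNPP; intros H. apply HO. exists M, (S i). split; auto. intros N. apply NNPP; intros H2. apply H.
    exists N. intros n Hn. apply Rnot_lt_le. intros H4. apply H2; eauto. }
  destruct Pi as [N1 H1]. destruct HB as [N2 H2]. exists (N1 + N2)%nat. intros j k Hj Hk.
  assert (E : gr M (S (S i)) = gr M i + / INR (S m)).
  { rewrite !gr_S. unfold M. rewrite !S_INR, plus_INR, mult_INR. simpl. field.
    pose proof (pos_INR m). lra. }
  pose proof (H1 j ltac:(lia)). pose proof (H1 k ltac:(lia)). pose proof (H2 j ltac:(lia)). pose proof (H2 k ltac:(lia)).
  apply Rabs_le. lra.
Qed.

Fixpoint upst (X : list nat -> R) (a b : R) (h : list nat) : bool * nat :=
  match h with
  | nil => (if Rle_dec (X nil) a then true else false, 0%nat)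
  | l :: h' => let (H, U) := upst X a b h' in
      if H then (if Rle_dec b (X (l :: h')) then (false, S U) else (true, U))
      else (if Rle_dec (X (l :: h')) a then true else false, U)
  end.

Fixpoint Gs (X : list nat -> R) (a b : R) (h : list nat) : R :=
  match h with
  | nil => 0
  | l :: h' => Gs X a b h' + (if fst (upst X a b h') then X (l :: h') - X h' else 0)
  end.

Lemma up_inv X a b h : a < b ->
  Gs X a b h >= (b - a) * INR (snd (upst X a b h)) + (if fst (upst X a b h) then X h - a else 0).
Proof.
  intros Hab. induction h as [|l h IH]; simpl.
  - destruct (Rle_dec (X nil) a); simpl; lra.
  - destruct (upst X a b h) as [H U]. simpl in *. destruct H.
    + destruct (Rle_dec b (X (l :: h))); cbn [fst snd]; [rewrite S_INR; nra|lra].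
    + destruct (Rle_dec (X (l :: h)) a); simpl; lra.
Qed.

Lemma up_mono X a b l h : (snd (upst X a b h) <= snd (upst X a b (l :: h)))%nat.
Proof. simpl. destruct (upst X a b h) as [H U]; simpl. destruct H; [destruct (Rle_dec b (X (l :: h)))|destruct (Rle_dec (X (l :: h)) a)]; simpl; lia. Qed.

Lemma Gs_super L p X a b h : rsum L p = 1 ->
  (forall h', rsum L (fun l => p l * X (l :: h')) <= X h') -> (forall l, (l < L)%nat -> 0 <= p l) ->
  rsum L (fun l => p l * Gs X a b (l :: h)) <= Gs X a b h.
Proof.
  intros Hs Hsup Hp. simpl. destruct (fst (upst X a b h)).
  - rewrite (rsum_ext L _ (fun l => (Gs X a b h - X h) * p l + p l * X (l :: h))) by (intros; ring).
    rewrite rsum_plus, rsum_scal, Hs. specialize (Hsup h). lra.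
  - rewrite (rsum_ext L _ (fun l => Gs X a b h * p l)) by (intros; ring). rewrite rsum_scal, Hs. lra.
Qed.

Lemma up_bound X a b h K : 0 <= a -> a < b -> (forall h, 0 <= X h) -> (1 <= K)%nat ->
  indic (fun h => (K <= snd (upst X a b h))%nat) h <= / ((b - a) * INR K) * Gs X a b h + a / ((b - a) * INR K).
Proof.
  intros Ha Hab HX HK. pose proof (up_inv X a b h Hab) as Hi.
  assert (Hx : (if fst (upst X a b h) then X h - a else 0) >= - a) by (destruct (fst _); specialize (HX h); lra).
  assert (HKp : 0 < INR K) by (apply lt_0_INR; lia).
  assert (Hc : 0 < (b - a) * INR K) by (apply Rmult_lt_0_compat; lra).
  replace (/ ((b - a) * INR K) * Gs X a b h + a / ((b - a) * INR K)) with ((Gs X a b h + a) / ((b - a) * INR K)) by (field; lra).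
  unfold indic. destruct (excluded_middle_informative _) as [HU|HU].
  - apply le_INR in HU. apply Rmult_le_reg_r with ((b - a) * INR K); auto.
    unfold Rdiv. rewrite Rmult_assoc, Rinv_l by lra. 
    assert ((b - a) * INR K <= (b - a) * INR (snd (upst X a b h))) by (apply Rmult_le_compat_l; lra). lra.
  - unfold Rdiv. apply Rmult_le_pos. pose proof (pos_INR (snd (upst X a b h))).
    assert (0 <= (b - a) * INR (snd (upst X a b h))) by (apply Rmult_le_pos; lra). lra.
    left; apply Rinv_0_lt_compat; auto.
Qed.

Definition superH (L : nat) (p : nat -> R) (X : list nat -> R) :=
  forall h, rsum L (fun l => p l * X (l :: h)) <= X h.

Lemma Pr_up_bound Ps xi L p (HP : PSetting Ps xi L p) X a b K n :
  (forall h, 0 <= X h) -> superH L p X -> 0 <= a -> a < b -> (1 <= K)%nat ->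
  Pr Ps (fun w => (K <= snd (upst X a b (hist Ps xi n w)))%nat) <= a / ((b - a) * INR K).
Proof.
  intros HX Hs Ha Hab HK.
  eapply Rle_trans. apply (Pr_markov _ _ _ _ HP n (fun h => (K <= snd (upst X a b h))%nat) (fun h => / ((b - a) * INR K) * Gs X a b h + a / ((b - a) * INR K))).
  intros h; apply up_bound; auto.
  rewrite Ex_lin by (apply (PS_sum _ _ _ _ HP)).
  assert (Hc : 0 <= / ((b - a) * INR K)).
  { left; apply Rinv_0_lt_compat, Rmult_lt_0_compat. lra. apply lt_0_INR; lia. }
  assert (Ex L p n (Gs X a b) nil <= 0).
  { change 0 with (Gs X a b nil). apply Ex_super. apply (PS_nonneg _ _ _ _ HP).
    intros h. apply Gs_super; auto. apply (PS_sum _ _ _ _ HP). apply (PS_nonneg _ _ _ _ HP). }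
  assert (/ ((b - a) * INR K) * Ex L p n (Gs X a b) nil <= 0).
  { rewrite <- (Rmult_0_r (/ ((b - a) * INR K))). apply Rmult_le_compat_l; auto. }
  lra.
Qed.

Lemma meas_Xh Ps xi L p (HP : PSetting Ps xi L p) (X : list nat -> R) n (R0 : R -> Prop) :
  meas Ps (fun w => R0 (X (hist Ps xi n w))).
Proof. apply (PS_m1 _ _ _ _ HP n (fun s => R0 (X s))). Qed.

Lemma osc_up X M i (u : nat -> list nat) :
  (forall n, exists l, u (S n) = l :: u n) -> u 0%nat = nil ->
  OscS (fun n => X (u n)) M i -> forall K, exists n, (K <= snd (upst X (gr M i) (gr M (S i)) (u n)))%nat.
Proof.
  intros Hu H0 [Ho1 Ho2]. set (a := gr M i). set (b := gr M (S i)).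
  assert (Hab : a < b). { unfold a, b. rewrite gr_S. pose proof (pos_INR M). 
    assert (0 < / INR (S M)) by (apply Rinv_0_lt_compat; rewrite S_INR; lra). lra. }
  assert (HA : forall n, X (u n) < a -> fst (upst X a b (u n)) = true).
  { intros [|n] Hn. rewrite H0 in *. simpl. destruct (Rle_dec (X nil) a); auto. lra.
    destruct (Hu n) as [l Hl]. rewrite Hl in *. simpl. destruct (upst X a b (u n)) as [H U]. destruct H.
    destruct (Rle_dec b (X (l :: u n))); auto; lra. destruct (Rle_dec (X (l :: u n)) a); auto; lra. }
  assert (HU : forall n, (snd (upst X a b (u n)) <= snd (upst X a b (u (S n))))%nat).
  { intros n. destruct (Hu n) as [l ->]. apply up_mono. }
  assert (HUm : forall n k, (n <= k)%nat -> (snd (upst X a b (u n)) <= snd (upst X a b (u k)))%nat).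
  { intros n k Hk. induction Hk; auto. specialize (HU m). lia. }
  assert (HB : forall k j, fst (upst X a b (u j)) = true -> b < X (u (S (j + k))) ->
             (S (snd (upst X a b (u j))) <= snd (upst X a b (u (S (j + k)))))%nat).
  { induction k; intros j Hj Hb.
    - rewrite Nat.add_0_r in *. destruct (Hu j) as [l Hl]. rewrite Hl in *. simpl.
      destruct (upst X a b (u j)) as [H U]. simpl in Hj. subst H. destruct (Rle_dec b (X (l :: u j))); simpl; [lia|lra].
    - destruct (Hu j) as [l Hl]. 
      destruct (fst (upst X a b (u (S j)))) eqn:E.
      + specialize (IHk (S j) E). replace (S (S j + k)) with (S (j + S k)) in IHk by lia.
        specialize (IHk Hb). specialize (HU j). lia.
      + assert (S (snd (upst X a b (u j))) <= snd (upst X a b (u (S j))))%nat.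
        { rewrite Hl in *. simpl in E |- *. destruct (upst X a b (u j)) as [H U]. simpl in Hj. subst H.
          destruct (Rle_dec b (X (l :: u j))); simpl in *; [lia|discriminate]. }
        pose proof (HUm (S j) (S (j + S k)) ltac:(lia)). lia. }
  assert (Step : forall N, exists n, (S (snd (upst X a b (u N))) <= snd (upst X a b (u n)))%nat).
  { intros N. destruct (Ho1 N) as [n1 [Hn1 Hx1]]. destruct (Ho2 (S n1)) as [n2 [Hn2 Hx2]].
    exists n2. replace n2 with (S (n1 + (n2 - S n1))) in * by lia.
    pose proof (HB _ _ (HA n1 Hx1) Hx2). pose proof (HUm N n1 Hn1). lia. }
  intros K. induction K. exists 0%nat; lia. destruct IHK as [n Hn]. destruct (Step n) as [n' Hn']. exists n'. lia.
Qed.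

Lemma Osc_null Ps xi L p (HP : PSetting Ps xi L p) X M i :
  (forall h, 0 <= X h) -> superH L p X ->
  meas Ps (fun w => OscS (fun n => X (hist Ps xi n w)) M i) /\
  Pr Ps (fun w => OscS (fun n => X (hist Ps xi n w)) M i) = 0.
Proof.
  intros HX Hs.
  assert (Hm : meas Ps (fun w => OscS (fun n => X (hist Ps xi n w)) M i)).
  { unfold OscS. apply meas_and; apply meas_forall; intros N; apply meas_exists; intros n;
    apply meas_and_const. apply (meas_Xh _ _ _ _ HP X n (fun r => r < gr M i)).
    apply (meas_Xh _ _ _ _ HP X n (fun r => gr M (S i) < r)). }
  split; auto.
  set (a := gr M i). set (b := gr M (S i)).
  assert (Ha : 0 <= a) by (unfold a, gr; apply Rmult_le_pos; [apply pos_INR|left; apply Rinv_0_lt_compat, lt_0_INR; lia]).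
  assert (Hab : a < b). { unfold a, b. rewrite gr_S. pose proof (pos_INR M). 
    assert (0 < / INR (S M)) by (apply Rinv_0_lt_compat; rewrite S_INR; lra). lra. }
  apply (null_of_bounds Ps _ (a / (b - a))); auto. intros K.
  eapply Rle_trans.
  - apply (Pr_mono Ps _ (fun w => exists n, (S K <= snd (upst X a b (hist Ps xi n w)))%nat)); auto.
    apply meas_exists; intros n. apply (PS_m1 _ _ _ _ HP n (fun s => (S K <= snd (upst X a b s))%nat)).
    intros w Hw. apply (osc_up X M i (fun n => hist Ps xi n w)); auto. intros n; exists (xi (S n) w); auto.
  - replace (a / (b - a) / INR (S K)) with (a / ((b - a) * INR (S K))).
    apply incr_union_bound.
    + intros n. apply (PS_m1 _ _ _ _ HP n (fun s => (S K <= snd (upst X a b s))%nat)).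
    + intros n w Hw. pose proof (up_mono X a b (xi (S n) w) (hist Ps xi n w)). simpl hist. lia.
    + intros n. apply Pr_up_bound with L p; auto. lia.
    + field. split; [lra|apply not_0_INR; lia].
Qed.

Lemma Infty_null Ps xi L p (HP : PSetting Ps xi L p) X :
  (forall h, 0 <= X h) -> superH L p X ->
  meas Ps (fun w => InftyS (fun n => X (hist Ps xi n w))) /\
  Pr Ps (fun w => InftyS (fun n => X (hist Ps xi n w))) = 0.
Proof.
  intros HX Hs.
  assert (Hm : forall K : nat, forall N, meas Ps (fun w => forall n, (N <= n)%nat -> INR K <= X (hist Ps xi n w))).
  { intros K N. apply meas_forall; intros n. apply meas_impl_const. apply (meas_Xh _ _ _ _ HP X n (fun r => INR K <= r)). }
  assert (Hm' : meas Ps (fun w => InftyS (fun n => X (hist Ps xi n w)))).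
  { unfold InftyS. apply meas_forall; intros K. apply meas_exists; intros N. apply Hm. }
  split; auto. apply (null_of_bounds Ps _ (X nil)); auto. intros K.
  eapply Rle_trans.
  - apply (Pr_mono Ps _ (fun w => exists N, forall n, (N <= n)%nat -> INR (S K) <= X (hist Ps xi n w))); auto.
    apply meas_exists; auto.
  - apply incr_union_bound; auto.
    + intros N w H n Hn. apply H. lia.
    + intros N. eapply Rle_trans.
      * apply (Pr_mono Ps _ (fun w => INR (S K) <= X (hist Ps xi N w))); auto.
        all: try apply (meas_Xh _ _ _ _ HP X N (fun r => INR (S K) <= r)). all: try (intros w H; apply H; lia).
      * assert (HK : 0 < INR (S K)) by (apply lt_0_INR; lia).
        eapply Rle_trans. apply (Pr_markov _ _ _ _ HP N (fun h => INR (S K) <= X h) (fun h => / INR (S K) * X h + 0)).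
        { intros h. unfold indic. destruct (excluded_middle_informative _).
          - apply Rmult_le_reg_l with (INR (S K)); auto. rewrite Rplus_0_r, <- Rmult_assoc, Rinv_r by lra. lra.
          - rewrite Rplus_0_r. apply Rmult_le_pos; auto. left; apply Rinv_0_lt_compat; auto. }
        rewrite Ex_lin by (apply (PS_sum _ _ _ _ HP)).
        assert (Ex L p N X nil <= X nil) by (apply Ex_super; [apply (PS_nonneg _ _ _ _ HP)|apply Hs]).
        unfold Rdiv. rewrite Rplus_0_r, (Rmult_comm (X nil)). apply Rmult_le_compat_l; auto. left; apply Rinv_0_lt_compat; auto.
Qed.

Lemma meas_Cauchy Ps xi L p (HP : PSetting Ps xi L p) (X : list nat -> R) :
  meas Ps (fun w => CauchyS (fun n => X (hist Ps xi n w))).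
Proof.
  unfold CauchyS. apply meas_forall; intros m. apply meas_exists; intros N. apply meas_forall; intros j.
  apply meas_forall; intros k. apply meas_impl_const. apply meas_impl_const.
  apply (PS_m2 _ _ _ _ HP j k (fun s t => Rabs (X s - X t) <= / INR (S m))).
Qed.

Theorem supermart_cauchy Ps xi L p (HP : PSetting Ps xi L p) X :
  (forall h, 0 <= X h) -> superH L p X ->
  Pr Ps (fun w => CauchyS (fun n => X (hist Ps xi n w))) = 1.
Proof.
  intros HX Hs.
  set (N := fun k w => match k with O => InftyS (fun n => X (hist Ps xi n w))
                        | S M => exists i, OscS (fun n => X (hist Ps xi n w)) M i end).
  assert (HN : forall k, meas Ps (N k) /\ Pr Ps (N k) = 0).
  { intros [|M]; unfold N. apply (Infty_null _ _ _ _ HP X); auto.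
    split. apply meas_exists; intros i; apply (Osc_null _ _ _ _ HP X M i); auto.
    apply null_union; intros i; apply (Osc_null _ _ _ _ HP X M i); auto. }
  assert (Hu : Pr Ps (fun w => exists k, N k w) = 0) by (apply null_union; intros k; apply HN).
  pose proof (meas_Cauchy _ _ _ _ HP X) as HC.
  assert (Hle : Pr Ps (fun w => ~ CauchyS (fun n => X (hist Ps xi n w))) <= 0).
  { rewrite <- Hu. apply Pr_mono. apply meas_compl; auto. apply meas_exists; intros; apply HN.
    intros w Hw. destruct (path_trichotomy (fun n => X (hist Ps xi n w))) as [H|[H|[M [i H]]]]; auto.
    tauto. exists 0%nat; auto. exists (S M); simpl; eauto. }
  rewrite Pr_compl in Hle; auto. pose proof (Pr_le1 _ _ HC). lra.
Qed.

Definition Bsq (d : nat -> nat) (x y : Yvec) (l : nat) : R := rsum (d l) (fun i => (x l i - y l i) ^ 2).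
Definition Qd (L : nat) (d : nat -> nat) (x y : Yvec) : R := rsum L (fun l => Bsq d x y l).
Definition Wd (L : nat) (d : nat -> nat) (p : nat -> R) (x y : Yvec) : R := rsum L (fun l => / p l * Bsq d x y l).

Lemma Bsq_nonneg d x y l : 0 <= Bsq d x y l.
Proof. apply rsum_nonneg; intros; apply pow2_ge_0. Qed.
Lemma Qd_nonneg L d x y : 0 <= Qd L d x y.
Proof. apply rsum_nonneg; intros; apply Bsq_nonneg. Qed.
Lemma Wd_nonneg L d p x y : (forall l, (l < L)%nat -> 0 < p l) -> 0 <= Wd L d p x y.
Proof. intros Hp. apply rsum_nonneg; intros. apply Rmult_le_pos. left; apply Rinv_0_lt_compat; auto. apply Bsq_nonneg. Qed.

Lemma Bsq_sym d x y l : Bsq d x y l = Bsq d y x l.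
Proof. apply rsum_ext; intros; ring. Qed.
Lemma Qd_sym L d x y : Qd L d x y = Qd L d y x.
Proof. apply rsum_ext; intros; apply Bsq_sym. Qed.
Lemma Wd_sym L d p x y : Wd L d p x y = Wd L d p y x.
Proof. apply rsum_ext; intros; rewrite Bsq_sym; auto. Qed.

Lemma Bsq_tri d x y z l : Bsq d x z l <= 2 * Bsq d x y l + 2 * Bsq d y z l.
Proof. unfold Bsq. rewrite <- !rsum_scal, <- rsum_plus. apply rsum_le; intros. 
  pose proof (pow2_ge_0 (x l k - 2 * y l k + z l k)). nra. Qed.
Lemma Qd_tri L d x y z : Qd L d x z <= 2 * Qd L d x y + 2 * Qd L d y z.
Proof. unfold Qd. rewrite <- !rsum_scal, <- rsum_plus. apply rsum_le; intros. apply Bsq_tri. Qed.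
Lemma Wd_tri L d p x y z : (forall l, (l < L)%nat -> 0 < p l) -> Wd L d p x z <= 2 * Wd L d p x y + 2 * Wd L d p y z.
Proof. intros Hp. unfold Wd. rewrite <- !rsum_scal, <- rsum_plus. apply rsum_le; intros.
  pose proof (Bsq_tri d x y z k). assert (0 < / p k) by (apply Rinv_0_lt_compat; auto). nra. Qed.

Lemma Qd_le_Wd L d p x y : (forall l, (l < L)%nat -> 0 < p l) -> rsum L p = 1 -> Qd L d x y <= Wd L d p x y.
Proof. intros Hp Hs. apply rsum_le; intros l Hl.
  assert (p l <= 1). { rewrite <- Hs. apply (rsum_term_le L p l); auto. intros; left; auto. }
  assert (1 <= / p l). { rewrite <- Rinv_1. apply Rinv_le_contravar; auto. }
  pose proof (Bsq_nonneg d x y l). nra. Qed.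

Lemma coord_le_Wd L d p x y l i : (forall l, (l < L)%nat -> 0 < p l) -> (l < L)%nat -> (i < d l)%nat ->
  (x l i - y l i) ^ 2 <= p l * Wd L d p x y.
Proof. intros Hp Hl Hi.
  assert (H1 : (x l i - y l i) ^ 2 <= Bsq d x y l).
  { apply (rsum_term_le (d l) (fun i => (x l i - y l i) ^ 2)); auto. intros; apply pow2_ge_0. }
  assert (H2 : / p l * Bsq d x y l <= Wd L d p x y).
  { apply (rsum_term_le L (fun l => / p l * Bsq d x y l)); auto. intros. apply Rmult_le_pos.
    left; apply Rinv_0_lt_compat; auto. apply Bsq_nonneg. }
  specialize (Hp l Hl). apply Rmult_le_compat_l with (r := p l) in H2; [|lra].
  rewrite <- Rmult_assoc, Rinv_r in H2 by lra. lra. Qed.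

Lemma Qd_zero_Yeq L d x y : Qd L d x y = 0 -> Yeq L d x y.
Proof. intros H l i Hl Hi.
  pose proof (rsum_zero_each L _ (fun l _ => Bsq_nonneg d x y l) H l Hl) as Hb.
  pose proof (rsum_zero_each (d l) _ (fun i _ => pow2_ge_0 (x l i - y l i)) Hb i Hi) as Hc.
  simpl in Hc. nra. Qed.

Lemma Yip_ext L d x y x' y' : (forall l i, (l < L)%nat -> (i < d l)%nat -> x l i * y l i = x' l i * y' l i) ->
  Yip L d x y = Yip L d x' y'.
Proof. intros H. apply rsum_ext; intros l Hl; apply rsum_ext; intros i Hi; auto. Qed.

Lemma Yip_Qd L d x y : Yip L d (Ysub x y) (Ysub x y) = Qd L d x y.
Proof. apply rsum_ext; intros l Hl; apply rsum_ext; intros i Hi. unfold Ysub. ring. Qed.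

Lemma fne_lip L d S x y : firmly_nonexpansive L d S -> Qd L d (S x) (S y) <= Qd L d x y.
Proof.
  intros HS. specialize (HS x y). rewrite Yip_Qd in HS.
  assert (Hi : Yip L d (Ysub x y) (Ysub (S x) (S y)) <= (Qd L d x y + Qd L d (S x) (S y)) / 2).
  { unfold Qd, Bsq, Yip. rewrite <- rsum_plus. unfold Rdiv. rewrite Rmult_comm, <- rsum_scal.
    apply rsum_le; intros l Hl. rewrite <- rsum_plus, <- rsum_scal. apply rsum_le; intros i Hi. unfold Ysub.
    pose proof (pow2_ge_0 ((x l i - y l i) - (S x l i - S y l i))). nra. }
  lra.
Qed.

Definition zeta (S : Yvec -> Yvec) (z0 : Yvec) : list nat -> Yvec :=
  fix zeta h := match h with nil => z0 | l :: h' => Shat S l (zeta h') end.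

Lemma Bsq_shat d S x z l l' : Bsq d (Shat S l x) z l' = if Nat.eqb l' l then Bsq d (S x) z l else Bsq d x z l'.
Proof. unfold Bsq, Shat. destruct (Nat.eqb_spec l' l). subst. apply rsum_ext; intros. auto.
  apply rsum_ext; intros. destruct (Nat.eqb_spec l' l); [lia|auto]. Qed.

Lemma Wd_shat L d p S x z l : (l < L)%nat ->
  Wd L d p (Shat S l x) z = Wd L d p x z + / p l * (Bsq d (S x) z l - Bsq d x z l).
Proof. intros Hl. unfold Wd.
  rewrite (rsum_ext L _ (fun l' => if Nat.eqb l' l then / p l * Bsq d (S x) z l else / p l' * Bsq d x z l')).
  rewrite rsum_upd by auto. ring.
  intros k Hk. rewrite Bsq_shat. destruct (Nat.eqb_spec k l); subst; auto. Qed.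

Lemma super_W L d p S z x : (forall l, (l < L)%nat -> 0 < p l) -> rsum L p = 1 ->
  firmly_nonexpansive L d S -> fixS L d S z ->
  rsum L (fun l => p l * Wd L d p (Shat S l x) z) <= Wd L d p x z - Qd L d (S x) x.
Proof.
  intros Hp Hs HS Hz.
  rewrite (rsum_ext L _ (fun l => Wd L d p x z * p l + (Bsq d (S x) z l - Bsq d x z l))).
  2:{ intros l Hl. rewrite Wd_shat by auto. field. specialize (Hp l Hl); lra. }
  rewrite rsum_plus, rsum_scal, Hs, rsum_minus.
  fold (Qd L d (S x) z). fold (Qd L d x z).
  pose proof (HS x z) as H.
  set (I := rsum L (fun l => rsum (d l) (fun i => (x l i - z l i) * (S x l i - z l i)))).
  assert (E1 : Yip L d (Ysub x z) (Ysub (S x) (S z)) = I).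
  { apply rsum_ext; intros l Hl; apply rsum_ext; intros i Hi. unfold Ysub. rewrite (Hz l i Hl Hi). auto. }
  assert (E2 : Yip L d (Ysub (S x) (S z)) (Ysub (S x) (S z)) = Qd L d (S x) z).
  { apply rsum_ext; intros l Hl; apply rsum_ext; intros i Hi. unfold Ysub. rewrite (Hz l i Hl Hi). ring. }
  rewrite E1, E2 in H.
  assert (E3 : Qd L d (S x) x = Qd L d x z - 2 * I + Qd L d (S x) z).
  { unfold Qd, Bsq, I. rewrite <- rsum_scal, <- rsum_minus, <- rsum_plus. apply rsum_ext; intros l Hl.
    rewrite <- rsum_scal, <- rsum_minus, <- rsum_plus. apply rsum_ext; intros i Hi. ring. }
  change (rsum L (Bsq d (S x) z)) with (Qd L d (S x) z). change (rsum L (Bsq d x z)) with (Qd L d x z). lra.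
Qed.

Lemma rsum_cv n (f : nat -> nat -> R) (g : nat -> R) :
  (forall j, (j < n)%nat -> Un_cv (fun k => f k j) (g j)) -> Un_cv (fun k => rsum n (f k)) (rsum n g).
Proof.
  induction n; intros H; simpl.
  - intros e He; exists 0%nat; intros; unfold Rdist; rewrite Rminus_diag, Rabs_R0; auto.
  - apply CV_plus. apply IHn; intros; apply H; lia. apply H; lia.
Qed.

Lemma Wd_cv L d p (u : nat -> Yvec) c y :
  (forall l i, (l < L)%nat -> (i < d l)%nat -> Un_cv (fun k => u k l i) (c l i)) ->
  Un_cv (fun k => Wd L d p (u k) y) (Wd L d p c y).
Proof.
  intros H. apply rsum_cv; intros l Hl. apply CV_mult.
  intros e He; exists 0%nat; intros; unfold Rdist; rewrite Rminus_diag, Rabs_R0; auto.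
  apply rsum_cv; intros i Hi. simpl. apply CV_mult. apply CV_minus. apply H; auto.
  intros e He; exists 0%nat; intros; unfold Rdist; rewrite Rminus_diag, Rabs_R0; auto.
  apply CV_mult. apply CV_minus. apply H; auto.
  intros e He; exists 0%nat; intros; unfold Rdist; rewrite Rminus_diag, Rabs_R0; auto.
  intros e He; exists 0%nat; intros; unfold Rdist; rewrite Rminus_diag, Rabs_R0; auto.
Qed.

Lemma Wd_to0_coord L d p (u : nat -> Yvec) c : (forall l, (l < L)%nat -> 0 < p l) ->
  Un_cv (fun k => Wd L d p (u k) c) 0 ->
  forall l i, (l < L)%nat -> (i < d l)%nat -> Un_cv (fun k => u k l i) (c l i).
Proof.
  intros Hp H l i Hl Hi e He.
  assert (Hpl := Hp l Hl).
  destruct (H (e * e / p l)) as [N HN]. apply Rdiv_lt_0_compat; nra.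
  exists N. intros n Hn. specialize (HN n Hn). unfold Rdist in *. rewrite Rminus_0_r in HN.
  rewrite Rabs_right in HN by (apply Rle_ge, Wd_nonneg; auto).
  pose proof (coord_le_Wd L d p (u n) c l i Hp Hl Hi).
  assert (p l * Wd L d p (u n) c < e * e).
  { apply Rmult_lt_compat_l with (r := p l) in HN; auto. unfold Rdiv in HN.
    rewrite (Rmult_comm (e*e)), <- Rmult_assoc, Rinv_r, Rmult_1_l in HN by lra. auto. }
  apply Rsqr_lt_abs_0 in H0 || idtac.
  assert (Rsqr (u n l i - c l i) < Rsqr e) by (unfold Rsqr; simpl in *; lra).
  apply Rsqr_lt_abs_0 in H2. rewrite (Rabs_right e) in H2 by lra. auto.
Qed.

Lemma subseq_ge (phi : nat -> nat) : (forall k, (phi k < phi (S k))%nat) -> forall k, (k <= phi k)%nat.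
Proof. intros H k. induction k. lia. specialize (H k). lia. Qed.

Lemma subseq_mono (phi : nat -> nat) : (forall k, (phi k < phi (S k))%nat) -> forall j k, (j < k)%nat -> (phi j < phi k)%nat.
Proof. intros H j k Hjk. induction Hjk. auto. specialize (H m). lia. Qed.

Lemma subseq_cv (u : nat -> R) c (phi : nat -> nat) : (forall k, (k <= phi k)%nat) -> Un_cv u c -> Un_cv (fun k => u (phi k)) c.
Proof. intros Hphi H e He. destruct (H e He) as [N HN]. exists N. intros n Hn. apply HN. specialize (Hphi n). lia. Qed.

Lemma bw1 (u : nat -> R) a b : (forall n, a <= u n <= b) ->
  exists phi : nat -> nat, (forall k, (phi k < phi (S k))%nat) /\ exists c, Un_cv (fun k => u (phi k)) c.
Proof.
  intros H. destruct (Bolzano_Weierstrass u (fun c => a <= c <= b) (compact_P3 a b) H) as [l Hl].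
  assert (Hp : forall N k : nat, exists p, (N <= p)%nat /\ Rabs (u p - l) < / INR (S k)).
  { intros N k. assert (Hk : 0 < / INR (S k)) by (apply Rinv_0_lt_compat, lt_0_INR; lia).
    destruct (Hl (disc l (mkposreal _ Hk)) N) as [p [Hp1 Hp2]].
    exists (mkposreal _ Hk). intros y Hy; auto. exists p; split; auto. }
  set (pick := fun N k => proj1_sig (constructive_indefinite_description _ (Hp N k))).
  assert (Hpick : forall N k, (N <= pick N k)%nat /\ Rabs (u (pick N k) - l) < / INR (S k)).
  { intros N k. unfold pick. destruct (constructive_indefinite_description _ _); simpl; auto. }
  set (phi := fix phi k := match k with O => pick 0%nat 0%nat | S k' => pick (S (phi k')) (S k') end).
  exists phi. split.
  - intros k. simpl. destruct (Hpick (S (phi k)) (S k)). lia.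
  - exists l. intros e He. destruct (archimed_cor1 e He) as [N [HN HN0]]. exists N. intros n Hn.
    unfold Rdist. assert (Rabs (u (phi n) - l) < / INR (S n)).
    { destruct n; simpl. apply Hpick. apply Hpick. }
    eapply Rlt_trans; eauto. eapply Rle_lt_trans; [|apply HN].
    apply Rinv_le_contravar. apply lt_0_INR; lia. apply le_INR; lia.
Qed.

Lemma bwL (cs : list (nat * nat)) (x : nat -> Yvec) :
  (forall l i, In (l, i) cs -> exists a b, forall n, a <= x n l i <= b) ->
  exists phi : nat -> nat, (forall k, (phi k < phi (S k))%nat) /\
    exists c : Yvec, forall l i, In (l, i) cs -> Un_cv (fun k => x (phi k) l i) (c l i).
Proof.
  induction cs as [|[l i] cs IH]; intros H.
  - exists (fun k => k). split. intros; lia. exists (fun _ _ => 0). intros l i [].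
  - destruct IH as [phi [Hphi [c Hc]]]. intros l' i' Hin; apply H; simpl; auto.
    destruct (H l i (or_introl eq_refl)) as [a [b Hab]].
    destruct (bw1 (fun k => x (phi k) l i) a b) as [psi [Hpsi [c0 Hc0]]]. intros; apply Hab.
    exists (fun k => phi (psi k)). split.
    + intros k. apply subseq_mono; auto.
    + exists (fun l' i' => if andb (Nat.eqb l' l) (Nat.eqb i' i) then c0 else c l' i').
      intros l' i' Hin. destruct (andb (Nat.eqb l' l) (Nat.eqb i' i)) eqn:E.
      * apply Bool.andb_true_iff in E; destruct E as [E1 E2]; apply Nat.eqb_eq in E1; apply Nat.eqb_eq in E2; subst. exact Hc0.
      * apply (subseq_cv (fun k => x (phi k) l' i') _ psi); [apply subseq_ge; auto|].
        apply Hc. destruct Hin as [Hin|Hin]; auto. injection Hin; intros; subst.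
        rewrite !Nat.eqb_refl in E; discriminate.
Qed.

Definition coords (L : nat) (d : nat -> nat) : list (nat * nat) :=
  flat_map (fun l => map (fun i => (l, i)) (seq 0 (d l))) (seq 0 L).

Lemma coords_In L d l i : In (l, i) (coords L d) <-> (l < L)%nat /\ (i < d l)%nat.
Proof. unfold coords. rewrite in_flat_map. split.
  - intros [l' [H1 H2]]. apply in_map_iff in H2. destruct H2 as [i' [H3 H4]]. injection H3; intros; subst.
    apply in_seq in H1. apply in_seq in H4. lia.
  - intros [H1 H2]. exists l. split. apply in_seq; lia. apply in_map_iff. exists i. split; auto. apply in_seq; lia. Qed.

Lemma cauchy_bounded (u : nat -> R) : (forall m : nat, exists N, forall j k, (N <= j)%nat -> (N <= k)%nat -> Rabs (u j - u k) <= / INR (S m)) ->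
  exists N, forall n, (N <= n)%nat -> u n <= u N + 1.
Proof. intros H. destruct (H 0%nat) as [N HN]. exists N. intros n Hn. specialize (HN n N Hn (le_n _)).
  simpl in HN. rewrite Rinv_1 in HN. apply Rabs_le_between in HN || idtac. 
  destruct (Rabs_def2 _ _ (Rle_lt_trans _ _ (1+1) HN ltac:(lra))) as [? ?] || idtac.
  pose proof (Rle_abs (u n - u N)). lra. Qed.

Lemma cauchy_cv (u : nat -> R) : (forall m : nat, exists N, forall j k, (N <= j)%nat -> (N <= k)%nat -> Rabs (u j - u k) <= / INR (S m)) ->
  exists r, Un_cv u r.
Proof. intros H. destruct (R_complete u) as [r Hr]; eauto.
  intros e He. destruct (archimed_cor1 e He) as [m [Hm Hm0]]. destruct (H m) as [N HN]. exists N.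
  intros j k Hj Hk. unfold Rdist. eapply Rle_lt_trans. apply HN; auto.
  eapply Rle_lt_trans; [|apply Hm]. apply Rinv_le_contravar. apply lt_0_INR; lia. apply le_INR; lia. Qed.

Lemma sq_bound_abs (t C : R) : 0 <= C -> t ^ 2 <= C -> Rabs t <= C + 1.
Proof. intros HC H. destruct (Rle_dec (Rabs t) 1). lra.
  assert (Rabs t <= t ^ 2). { rewrite <- (Rabs_pow2 t) || idtac. pose proof (Rabs_pos t).
    replace (t ^ 2) with (Rabs t * Rabs t). nra. simpl. rewrite Rmult_1_r. rewrite <- Rabs_mult. apply Rabs_right.
    apply Rle_ge; nra. } lra. Qed.

Lemma Wd_self L d p c : Wd L d p c c = 0.
Proof. unfold Wd. rewrite <- (rsum_const0 L). apply rsum_ext; intros l _. unfold Bsq.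
  rewrite (rsum_ext _ _ (fun _ => 0)) by (intros; ring). rewrite rsum_const0; ring. Qed.

Lemma small_zero a : 0 <= a -> (forall e, 0 < e -> a <= e) -> a = 0.
Proof. intros H0 H. destruct (Rle_dec a 0). lra. specialize (H (a / 2)). lra. Qed.

Lemma opial L d p T (x : nat -> Yvec) (D : nat -> nat -> Yvec) zs :
  (forall l, (l < L)%nat -> 0 < p l) -> rsum L p = 1 -> firmly_nonexpansive L d T ->
  fixS L d T zs -> CauchyS (fun n => Wd L d p (x n) zs) ->
  (forall e, 0 < e -> exists N, forall n, (N <= n)%nat -> Qd L d (T (x n)) (x n) < e) ->
  (forall n m, fixS L d T (D n m)) ->
  (forall n m, (exists z, fixS L d T z /\ Wd L d p z (x n) < / INR (S m)) -> Wd L d p (D n m) (x n) < / INR (S m)) ->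
  (forall n m, CauchyS (fun k => Wd L d p (x k) (D n m))) ->
  exists c, fixS L d T c /\ forall l i, (l < L)%nat -> (i < d l)%nat -> Un_cv (fun k => x k l i) (c l i).
Proof.
  intros Hp Hs HS Hzs HC HQ HD1 HD2 HD3.
  destruct (cauchy_bounded _ HC) as [N0 HN0].
  set (C := Wd L d p (x N0) zs + 1).
  assert (HC0 : 0 <= C) by (unfold C; pose proof (Wd_nonneg L d p (x N0) zs Hp); lra).
  destruct (bwL (coords L d) (fun k => x (N0 + k)%nat)) as [phi [Hphi [c Hc]]].
  { intros l i Hin. apply coords_In in Hin. destruct Hin as [Hl Hi].
    exists (zs l i - (p l * C + 1)), (zs l i + (p l * C + 1)). intros n.
    assert (H1 : (x (N0 + n)%nat l i - zs l i) ^ 2 <= p l * C).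
    { apply (Rle_trans _ (p l * Wd L d p (x (N0 + n)%nat) zs)). apply coord_le_Wd; auto. apply Rmult_le_compat_l. left; apply Hp; auto. apply HN0; lia. }
    assert (Hpc : 0 <= p l * C) by (apply Rmult_le_pos; [left; apply Hp; auto|auto]).
    pose proof (sq_bound_abs _ _ Hpc H1) as H2.
    apply Rabs_le_between in H2 || idtac. pose proof (Rle_abs (x (N0 + n)%nat l i - zs l i)).
    pose proof (Rle_abs (- (x (N0 + n)%nat l i - zs l i))). rewrite Rabs_Ropp in H0. lra. }
  set (psi := fun k => (N0 + phi k)%nat).
  assert (Hpsi : forall k, (k <= psi k)%nat) by (intros k; unfold psi; pose proof (subseq_ge phi Hphi k); lia).
  assert (Hc' : forall l i, (l < L)%nat -> (i < d l)%nat -> Un_cv (fun k => x (psi k) l i) (c l i)).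
  { intros l i Hl Hi. apply (Hc l i). apply coords_In; auto. }
  assert (HWc : Un_cv (fun k => Wd L d p (x (psi k)) c) 0).
  { rewrite <- (Wd_self L d p c). apply Wd_cv; auto. }
  assert (Hfix : fixS L d T c).
  { apply Qd_zero_Yeq. apply small_zero. apply Qd_nonneg. intros e He.
    destruct (HWc (e / 12)) as [N1 HN1]. lra. destruct (HQ (e / 8)) as [N2 HN2]. lra.
    set (k := (N1 + N2)%nat). specialize (HN1 k ltac:(unfold k; lia)). specialize (HN2 (psi k) ltac:(specialize (Hpsi k); unfold k in *; lia)).
    set (y := x (psi k)) in *. unfold Rdist in HN1. rewrite Rminus_0_r, Rabs_right in HN1 by (apply Rle_ge, Wd_nonneg; auto).
    pose proof (Qd_tri L d (T c) (T y) c). pose proof (fne_lip L d T c y HS).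
    pose proof (Qd_tri L d (T y) y c). pose proof (Qd_le_Wd L d p y c Hp Hs).
    rewrite (Qd_sym L d c y) in H0. lra. }
  exists c. split; auto.
  apply (Wd_to0_coord L d p x c Hp).
  intros e He. destruct (archimed_cor1 (e / 20)) as [m0 [Hm0 Hm00]]. lra.
  destruct m0 as [|m]; [lia|]. set (dl := / INR (S m)) in *.
  assert (Hdl : 0 < dl) by (apply Rinv_0_lt_compat, lt_0_INR; lia).
  destruct (HWc dl Hdl) as [K0 HK0]. specialize (HK0 K0 (le_n _)). unfold Rdist in HK0.
  rewrite Rminus_0_r, Rabs_right in HK0 by (apply Rle_ge, Wd_nonneg; auto).
  set (n0 := psi K0) in *. set (z := D n0 m).
  assert (Hz1 : Wd L d p z (x n0) < dl).
  { apply HD2. exists c. split; auto. rewrite Wd_sym; auto. }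
  assert (Hz2 : Wd L d p z c < 4 * dl).
  { pose proof (Wd_tri L d p z (x n0) c Hp). lra. }
  destruct (cauchy_cv _ (HD3 n0 m)) as [r Hr].
  assert (Hr2 : r = Wd L d p c z).
  { apply (UL_sequence (fun k => Wd L d p (x (psi k)) z)). apply (subseq_cv (fun k => Wd L d p (x k) z) r psi Hpsi Hr). apply Wd_cv; auto. }
  destruct (Hr dl Hdl) as [N HN]. exists N. intros n Hn. specialize (HN n Hn). unfold Rdist in *.
  rewrite Rminus_0_r, Rabs_right by (apply Rle_ge, Wd_nonneg; auto).
  pose proof (Rle_abs (Wd L d p (x n) z - r)).
  pose proof (Wd_tri L d p (x n) z c Hp). rewrite (Wd_sym L d p c z) in Hr2. change (D n0 m) with z in HN. lra.
Qed.

Lemma iter_hist Ps xi T z0 w n : rbcd_iter T (fun k => xi k w) z0 n = zeta T z0 (hist Ps xi n w).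
Proof. induction n; simpl; auto. rewrite IHn. auto. Qed.

Lemma cv_cauchyS (u : nat -> R) r : Un_cv u r -> CauchyS u.
Proof. intros H m. assert (He : 0 < / INR (S m) / 2) by (apply Rdiv_lt_0_compat; [apply Rinv_0_lt_compat, lt_0_INR; lia|lra]).
  destruct (H _ He) as [N HN]. exists N. intros j k Hj Hk. pose proof (HN j Hj). pose proof (HN k Hk).
  unfold Rdist in *. replace (u j - u k) with ((u j - r) - (u k - r)) by ring.
  eapply Rle_trans. apply Rabs_triang. rewrite Rabs_Ropp. lra. Qed.

Lemma limit_fixed L d p T (y : nat -> Yvec) c :
  (forall l, (l < L)%nat -> 0 < p l) -> rsum L p = 1 -> firmly_nonexpansive L d T ->
  Un_cv (fun k => Wd L d p (y k) c) 0 ->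
  (forall e, 0 < e -> exists N, forall n, (N <= n)%nat -> Qd L d (T (y n)) (y n) < e) -> fixS L d T c.
Proof.
  intros Hp Hs HS HWc HQ. apply Qd_zero_Yeq. apply small_zero. apply Qd_nonneg. intros e He.
  destruct (HWc (e / 12)) as [N1 HN1]. lra. destruct (HQ (e / 8)) as [N2 HN2]. lra.
  set (k := (N1 + N2)%nat). specialize (HN1 k ltac:(unfold k; lia)). specialize (HN2 k ltac:(unfold k; lia)).
  set (z := y k) in *. unfold Rdist in HN1. rewrite Rminus_0_r, Rabs_right in HN1 by (apply Rle_ge, Wd_nonneg; auto).
  pose proof (Qd_tri L d (T c) (T z) c). pose proof (fne_lip L d T c z HS).
  pose proof (Qd_tri L d (T z) z c). pose proof (Qd_le_Wd L d p z c Hp Hs).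
  rewrite (Qd_sym L d c z) in H0. lra.
Qed.

Definition limv (u : nat -> R) : R :=
  match excluded_middle_informative (exists r, Un_cv u r) with
  | left H => proj1_sig (constructive_indefinite_description _ H)
  | right _ => 0 end.

Lemma limv_spec u : (exists r, Un_cv u r) -> Un_cv u (limv u).
Proof. intros H. unfold limv. destruct (excluded_middle_informative _); [|tauto].
  destruct (constructive_indefinite_description _ _); auto. Qed.

Definition Dsel L d p T z0 (zs : Yvec) (s : list nat) (m : nat) : Yvec :=
  match excluded_middle_informative (exists z, fixS L d T z /\ Wd L d p z (zeta T z0 s) < / INR (S m)) with
  | left H => proj1_sig (constructive_indefinite_description _ H)
  | right _ => zs end.

Lemma Dsel_fix L d p T z0 zs s m : fixS L d T zs -> fixS L d T (Dsel L d p T z0 zs s m).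
Proof. intros H. unfold Dsel. destruct (excluded_middle_informative _); auto.
  destruct (constructive_indefinite_description _ _) as [z Hz]; simpl; apply Hz. Qed.

Lemma Dsel_near L d p T z0 zs s m : (exists z, fixS L d T z /\ Wd L d p z (zeta T z0 s) < / INR (S m)) ->
  Wd L d p (Dsel L d p T z0 zs s m) (zeta T z0 s) < / INR (S m).
Proof. intros H. unfold Dsel. destruct (excluded_middle_informative _); [|tauto].
  destruct (constructive_indefinite_description _ _) as [z Hz]; simpl; apply Hz. Qed.

Fixpoint Rres (T : Yvec -> Yvec) (z0 : Yvec) (L : nat) (d : nat -> nat) (h : list nat) : R :=
  match h with nil => 0 | l :: h' => Rres T z0 L d h' + Qd L d (T (zeta T z0 h')) (zeta T z0 h') end.

Lemma superX L d p T z0 z : (forall l, (l < L)%nat -> 0 < p l) -> rsum L p = 1 ->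
  firmly_nonexpansive L d T -> fixS L d T z ->
  superH L p (fun h => Wd L d p (zeta T z0 h) z).
Proof. intros Hp Hs HS Hz h. simpl. eapply Rle_trans. apply super_W; auto. pose proof (Qd_nonneg L d (T (zeta T z0 h)) (zeta T z0 h)). lra. Qed.

Lemma superY L d p T z0 z : (forall l, (l < L)%nat -> 0 < p l) -> rsum L p = 1 ->
  firmly_nonexpansive L d T -> fixS L d T z ->
  superH L p (fun h => Wd L d p (zeta T z0 h) z + Rres T z0 L d h).
Proof. intros Hp Hs HS Hz h. simpl.
  rewrite (rsum_ext L _ (fun l => p l * Wd L d p (Shat T l (zeta T z0 h)) z + (Rres T z0 L d h + Qd L d (T (zeta T z0 h)) (zeta T z0 h)) * p l)) by (intros; ring).
  rewrite rsum_plus, rsum_scal, Hs. pose proof (super_W L d p T z (zeta T z0 h) Hp Hs HS Hz). lra. Qed.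

Lemma Rres_nonneg T z0 L d h : 0 <= Rres T z0 L d h.
Proof. induction h; simpl. lra. pose proof (Qd_nonneg L d (T (zeta T z0 h)) (zeta T z0 h)). lra. Qed.

Theorem mainTheorem3
  (L : nat) (d : nat -> nat) (S : Yvec -> Yvec)
  (HS : firmly_nonexpansive L d S)
  (Hfix : exists z, fixS L d S z)
  (Ps : ProbSpace) (xi : nat -> Omega Ps -> nat) (p : nat -> R)
  (Hxi_meas : forall k l, meas Ps (fun w => xi k w = l))
  (Hxi_range : forall k w, (1 <= k)%nat -> (xi k w < L)%nat)
  (Hxi_law : forall k l, (1 <= k)%nat -> (l < L)%nat ->
                Pr Ps (fun w => xi k w = l) = p l)
  (Hp_pos : forall l, (l < L)%nat -> 0 < p l)
  (Hindep : indep_discrete Ps xi)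
  (z0 : Yvec) :
  exists (Z : Omega Ps -> Yvec) (E : Omega Ps -> Prop),
    (forall l i c, (l < L)%nat -> (i < d l)%nat ->
        meas Ps (fun w => Z w l i <= c)) /\
    (forall w, fixS L d S (Z w)) /\
    meas Ps E /\ Pr Ps E = 1 /\
    (forall w, E w ->
       forall l i, (l < L)%nat -> (i < d l)%nat ->
         Un_cv (fun k => rbcd_iter S (fun k => xi k w) z0 k l i) (Z w l i)).
Proof.
  assert (HP : PSetting Ps xi L p) by (constructor; auto).
  pose proof (PS_sum _ _ _ _ HP) as Hs.
  destruct Hfix as [zs Hzs].
  set (x := fun w n => zeta S z0 (hist Ps xi n w)).
  set (Xz := fun z h => Wd L d p (zeta S z0 h) z).
  set (Y := fun h => Wd L d p (zeta S z0 h) zs + Rres S z0 L d h).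
  set (F := fun w => CauchyS (fun n => Xz zs (hist Ps xi n w)) /\ CauchyS (fun n => Y (hist Ps xi n w)) /\
     forall k m j, CauchyS (fun n => Xz (Dsel L d p S z0 zs (nth j (all_hist L k) nil) m) (hist Ps xi n w))).
  assert (HX : forall z, fixS L d S z -> meas Ps (fun w => CauchyS (fun n => Xz z (hist Ps xi n w))) /\
                                     Pr Ps (fun w => CauchyS (fun n => Xz z (hist Ps xi n w))) = 1).
  { intros z Hz. split. apply (meas_Cauchy _ _ _ _ HP (Xz z)).
    apply (supermart_cauchy _ _ _ _ HP (Xz z)). intros h; apply Wd_nonneg; auto. apply superX; auto. }
  assert (HYm : meas Ps (fun w => CauchyS (fun n => Y (hist Ps xi n w))) /\ Pr Ps (fun w => CauchyS (fun n => Y (hist Ps xi n w))) = 1).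
  { split. apply (meas_Cauchy _ _ _ _ HP Y).
    apply (supermart_cauchy _ _ _ _ HP Y). intros h. unfold Y. pose proof (Wd_nonneg L d p (zeta S z0 h) zs Hp_pos).
    pose proof (Rres_nonneg S z0 L d h). lra. apply superY; auto. }
  assert (H3 : forall k m, meas Ps (fun w => forall j, CauchyS (fun n => Xz (Dsel L d p S z0 zs (nth j (all_hist L k) nil) m) (hist Ps xi n w)))
                   /\ Pr Ps (fun w => forall j, CauchyS (fun n => Xz (Dsel L d p S z0 zs (nth j (all_hist L k) nil) m) (hist Ps xi n w))) = 1).
  { intros k m. apply prob1_forall; intros j; apply HX; apply Dsel_fix; auto. }
  assert (H3' : forall k, meas Ps (fun w => forall m j, CauchyS (fun n => Xz (Dsel L d p S z0 zs (nth j (all_hist L k) nil) m) (hist Ps xi n w)))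
                   /\ Pr Ps (fun w => forall m j, CauchyS (fun n => Xz (Dsel L d p S z0 zs (nth j (all_hist L k) nil) m) (hist Ps xi n w))) = 1).
  { intros k. apply prob1_forall; intros m; apply H3. }
  assert (H3'' := prob1_forall Ps _ (fun k => proj1 (H3' k)) (fun k => proj2 (H3' k))).
  destruct (HX zs Hzs) as [HXm HX1]. destruct HYm as [HYm HY1]. destruct H3'' as [H3m H31].
  assert (HFm : meas Ps F) by (unfold F; repeat apply meas_and; auto).
  assert (HF1 : Pr Ps F = 1) by (unfold F; repeat apply prob1_and; auto; apply meas_and; auto).
  assert (HQ0 : forall w, F w -> forall e, 0 < e -> exists N, forall n, (N <= n)%nat -> Qd L d (S (x w n)) (x w n) < e).
  { intros w [Hc1 [Hc2 _]] e He.
    destruct (cauchy_cv _ Hc1) as [r1 Hr1]. destruct (cauchy_cv _ Hc2) as [r2 Hr2].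
    assert (Hr : Un_cv (fun n => Rres S z0 L d (hist Ps xi n w)) (r2 - r1)).
    { pose proof (CV_minus _ _ _ _ Hr2 Hr1) as H. intros eps Heps. destruct (H eps Heps) as [N HN]. exists N.
      intros n Hn. specialize (HN n Hn). unfold Y, Xz in HN. replace (Rres S z0 L d (hist Ps xi n w)) with
        (Wd L d p (zeta S z0 (hist Ps xi n w)) zs + Rres S z0 L d (hist Ps xi n w) - Wd L d p (zeta S z0 (hist Ps xi n w)) zs) by ring. auto. }
    destruct (Hr (e / 2)) as [N HN]. lra. exists N. intros n Hn.
    pose proof (HN n Hn). pose proof (HN (Datatypes.S n) ltac:(lia)). unfold Rdist in *. simpl hist in H0. simpl Rres in H0.
    unfold x. pose proof (Qd_nonneg L d (S (zeta S z0 (hist Ps xi n w))) (zeta S z0 (hist Ps xi n w))).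
    pose proof (Rabs_def2 _ _ H). pose proof (Rabs_def2 _ _ H0). lra. }
  set (Good := fun w => (forall l i, (l < L)%nat -> (i < d l)%nat -> CauchyS (fun n => x w n l i)) /\
     (forall m : nat, exists N, forall n, (N <= n)%nat -> Qd L d (S (x w n)) (x w n) <= / INR (Datatypes.S m))).
  set (Z := fun w => if excluded_middle_informative (Good w) then (fun l i => limv (fun n => x w n l i)) else zs).
  assert (G1 : forall w, Good w -> forall l i, (l < L)%nat -> (i < d l)%nat -> Un_cv (fun n => x w n l i) (Z w l i)).
  { intros w Hg l i Hl Hi. unfold Z. destruct (excluded_middle_informative (Good w)); [|tauto].
    apply limv_spec. apply cauchy_cv. apply Hg; auto. }
  assert (G2 : forall w, fixS L d S (Z w)).
  { intros w. destruct (excluded_middle_informative (Good w)) as [Hg|Hg].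
    - apply (limit_fixed L d p S (x w)); auto.
      + rewrite <- (Wd_self L d p (Z w)). apply Wd_cv. auto.
      + intros e He. destruct (archimed_cor1 e He) as [m0 [Hm0 Hm00]]. destruct m0 as [|m]; [lia|].
        destruct (proj2 Hg m) as [N HN]. exists N. intros n Hn. specialize (HN n Hn). lra.
    - unfold Z. destruct (excluded_middle_informative (Good w)); tauto. }
  assert (G3 : forall w, F w -> Good w /\ forall l i, (l < L)%nat -> (i < d l)%nat -> Un_cv (fun n => x w n l i) (Z w l i)).
  { intros w Hw.
    assert (HD3 : forall n m, CauchyS (fun k => Wd L d p (x w k) (Dsel L d p S z0 zs (hist Ps xi n w) m))).
    { intros n m. destruct (In_nth _ _ nil (all_hist_In L n (hist Ps xi n w) (hist_length _ _ _ _) (hist_valid _ _ _ Hxi_range n w))) as [j [_ Hj]].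
      destruct Hw as [_ [_ Hw]]. specialize (Hw n m j). rewrite Hj in Hw. apply Hw. }
    destruct (opial L d p S (x w) (fun n m => Dsel L d p S z0 zs (hist Ps xi n w) m) zs Hp_pos Hs HS Hzs (proj1 Hw) (HQ0 w Hw)
      (fun n m => Dsel_fix L d p S z0 zs _ m Hzs) (fun n m H => Dsel_near L d p S z0 zs _ m H) HD3) as [c [Hc Hcv]].
    assert (Hg : Good w).
      { split. intros l i Hl Hi. apply (cv_cauchyS _ (c l i)). apply Hcv; auto.
        intros m. destruct (HQ0 w Hw (/ INR (Datatypes.S m))) as [N HN]. apply Rinv_0_lt_compat, lt_0_INR; lia.
        exists N. intros n Hn. left; auto. }
      split; auto. }
  exists Z, F. split; [|split; [auto|split; [auto|split; [auto|]]]].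
  - intros l i c Hl Hi.
    assert (HGm : meas Ps Good).
    { unfold Good. apply meas_and.
      - apply meas_forall; intros l'. apply meas_forall; intros i'. apply meas_impl_const, meas_impl_const.
        apply (meas_Cauchy _ _ _ _ HP (fun h => zeta S z0 h l' i')).
      - apply meas_forall; intros m. apply meas_exists; intros N. apply meas_forall; intros n. apply meas_impl_const.
        apply (PS_m1 _ _ _ _ HP n (fun h => Qd L d (S (zeta S z0 h)) (zeta S z0 h) <= / INR (Datatypes.S m))). }
    apply (meas_ext _ (fun w => (Good w /\ forall m : nat, exists N, forall n, (N <= n)%nat -> x w n l i <= c + / INR (Datatypes.S m))
                             \/ (~ Good w /\ zs l i <= c))).
    + intros w. split.
      * intros [[Hg Hm]|[Hg Hz]].
        -- pose proof (G1 w Hg l i Hl Hi) as Hcv. apply Rnot_lt_le. intros Hlt.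
           set (ell := Z w l i) in *. 
           destruct (archimed_cor1 ((ell - c) / 2)) as [m0 [Hm0 Hm00]]. lra. destruct m0 as [|m]; [lia|].
           destruct (Hm m) as [N1 HN1]. destruct (Hcv ((ell - c) / 2)) as [N2 HN2]. lra.
           specialize (HN1 (N1 + N2)%nat ltac:(lia)). specialize (HN2 (N1 + N2)%nat ltac:(lia)).
           unfold Rdist in HN2. pose proof (Rabs_def2 _ _ HN2). lra.
        -- unfold Z. destruct (excluded_middle_informative (Good w)); tauto.
      * intros H. destruct (classic (Good w)) as [Hg|Hg]; [left|right].
        -- split; auto. intros m. pose proof (G1 w Hg l i Hl Hi) as Hcv.
           destruct (Hcv (/ INR (Datatypes.S m))) as [N HN]. apply Rinv_0_lt_compat, lt_0_INR; lia.
           exists N. intros n Hn. specialize (HN n Hn). unfold Rdist in HN. pose proof (Rabs_def2 _ _ HN). lra.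
        -- split; auto. unfold Z in H. destruct (excluded_middle_informative (Good w)); tauto.
    + apply meas_or. apply meas_and; auto. apply meas_forall; intros m. apply meas_exists; intros N.
      apply meas_forall; intros n. apply meas_impl_const.
      apply (PS_m1 _ _ _ _ HP n (fun h => zeta S z0 h l i <= c + / INR (Datatypes.S m))).
      apply meas_and. apply meas_compl; auto. apply meas_const.
  - intros w Hw l i Hl Hi. destruct (G3 w Hw) as [_ Hcv]. specialize (Hcv l i Hl Hi).
    intros e He. destruct (Hcv e He) as [N HN]. exists N. intros n Hn. rewrite iter_hist with (Ps := Ps). apply HN; auto.
Qed.
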